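(* Let $X$ be a real Banach space with a basis $(e_k)_{k=1}^N$, where $1\le N\le\infty$, with biorthogonal functionals $(e_k^* )$. Suppose $1\le m_1<m_2<\dots<m_n<N$ and that for every $x\in[e_j]_{j=1}^{m_1}$ the sequence $\{x,e_{m_1+1},e_{m_1+2},\dots\}$ is skipped $\lambda$-unconditional. Let $x^*,y^*\in X^*\setminus\{0\}$ satisfy $x^*\in[e_k^*]_{k=1}^{m_1}$ and $y^*(e_j)=0$ for $1\le j\le m_n$. Then $\{x^*,e^*_{m_2},\dots,e^*_{m_{n-1}},y^*\}$ is a dual skipped $\lambda$-unconditional basis of its linear span. In particular this conclusion holds whenever $(e_k)_{k=1}^N$ itself is skipped $\lambda$-unconditional.
   Context: A basic sequence $(e_k)_{k=1}^N$ ($1\le N\le\infty$) is skipped $\lambda$-unconditional if whenever $0=m_0<m_1<\dots<m_n<\infty$ with $m_j-m_{j-1}\ge2$ for $1\le j\le n$, and $y_j\in[e_i]_{i=m_{j-1}+1}^{m_j-1}$ (spans taken only over indices $i\le N$), then $\|\sum_{j=1}^n\epsilon_jy_j\|\le\lambda\|\sum_{j=1}^ny_j\|$ for all signs $\epsilon_j=\pm1$. A basis $(f_k)_{k=1}^M$ of a finite-dimensional space $F$ is dual skipped $\lambda$-unconditional if its dual (biorthogonal) basis $(f_k^* )_{k=1}^M$ in $F^*$ is skipped $\lambda$-unconditional. $[\,\cdot\,]$ denotes closed linear span. *)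

(* Defs.v *)
From Stdlib Require Import Reals List Arith ClassicalEpsilon.
Open Scope R_scope.

Record NormedSpace := {
  carrier :> Type;
  vzero : carrier;
  vadd : carrier -> carrier -> carrier;
  vopp : carrier -> carrier;
  vscal : R -> carrier -> carrier;
  vnorm : carrier -> R;
  vadd_assoc : forall x y z, vadd x (vadd y z) = vadd (vadd x y) z;
  vadd_comm : forall x y, vadd x y = vadd y x;
  vadd_0 : forall x, vadd x vzero = x;
  vadd_opp : forall x, vadd x (vopp x) = vzero;
  vscal_1 : forall x, vscal 1 x = x;
  vscal_assoc : forall a b x, vscal a (vscal b x) = vscal (a * b) x;
  vscal_distr_l : forall a b x, vscal (a + b) x = vadd (vscal a x) (vscal b x);
  vscal_distr_r : forall a x y, vscal a (vadd x y) = vadd (vscal a x) (vscal a y);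
  vnorm_nonneg : forall x, 0 <= vnorm x;
  vnorm_eq0 : forall x, vnorm x = 0 -> x = vzero;
  vnorm_scal : forall a x, vnorm (vscal a x) = Rabs a * vnorm x;
  vnorm_triangle : forall x y, vnorm (vadd x y) <= vnorm x + vnorm y
}.

Arguments vzero {_}. Arguments vadd {_}. Arguments vopp {_}.
Arguments vscal {_}. Arguments vnorm {_}.

Definition vsub {X : NormedSpace} (x y : X) : X := vadd x (vopp y).

Definition complete (X : NormedSpace) : Prop :=
  forall u : nat -> X,
    (forall eps, 0 < eps -> exists M, forall p q, (M <= p)%nat -> (M <= q)%nat ->
       vnorm (vsub (u p) (u q)) < eps) ->
    exists l : X, forall eps, 0 < eps -> exists M, forall p, (M <= p)%nat ->
       vnorm (vsub (u p) l) < eps.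

Definition gsum {T : Type} (zero : T) (add : T -> T -> T)
  (l : list nat) (f : nat -> T) : T :=
  fold_right (fun i acc => add (f i) acc) zero l.

(** Lengths 1 <= N <= infinity : [Some n] is n, [None] is infinity.
    Sequences are indexed by nat, from 1. *)
Definition in_len (N : option nat) (k : nat) : Prop :=
  (1 <= k)%nat /\ match N with Some n => (k <= n)%nat | None => True end.

Definition lt_len (m : nat) (N : option nat) : Prop :=
  match N with Some n => (m < n)%nat | None => True end.

(** y lies in the linear span of (e_i), a <= i < a + len, restricted to
    indices i <= N.  (Finite dimensional, hence equal to the closed span.) *)
Definition block_span {T : Type} (zero : T) (add : T -> T -> T)
  (scal : R -> T -> T) (N : option nat) (e : nat -> T) (a len : nat) (y : T) : Prop :=
  exists c : nat -> R, (forall i, ~ in_len N i -> c i = 0) /\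
    y = gsum zero add (seq a len) (fun i => scal (c i) (e i)).

Definition skipped_uncond {T : Type} (zero : T) (add : T -> T -> T)
  (scal : R -> T -> T) (norm : T -> R) (N : option nat) (e : nat -> T)
  (lam : R) : Prop :=
  forall (n : nat) (m : nat -> nat) (y : nat -> T) (eps : nat -> R),
    m 0%nat = 0%nat ->
    (forall j, (1 <= j <= n)%nat -> (m (j - 1) + 2 <= m j)%nat) ->
    (forall j, (1 <= j <= n)%nat ->
       block_span zero add scal N e (m (j - 1) + 1)%nat (m j - m (j - 1) - 1)%nat (y j)) ->
    (forall j, (1 <= j <= n)%nat -> eps j = 1 \/ eps j = -1) ->
    norm (gsum zero add (seq 1 n) (fun j => scal (eps j) (y j)))
      <= lam * norm (gsum zero add (seq 1 n) y).

Definition skipped_uncond_X (X : NormedSpace) (N : option nat) (e : nat -> X)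
  (lam : R) : Prop :=
  skipped_uncond (@vzero X) (@vadd X) (@vscal X) (@vnorm X) N e lam.

Definition expands (X : NormedSpace) (N : option nat) (e : nat -> X)
  (a : nat -> R) (x : X) : Prop :=
  match N with
  | Some n => x = gsum vzero vadd (seq 1 n) (fun k => vscal (a k) (e k))
  | None => forall eps, 0 < eps -> exists M, forall p, (M <= p)%nat ->
      vnorm (vsub (gsum vzero vadd (seq 1 p) (fun k => vscal (a k) (e k))) x) < eps
  end.

Definition is_basis (X : NormedSpace) (N : option nat) (e : nat -> X) : Prop :=
  (forall x : X, exists a, expands X N e a x) /\
  (forall (x : X) a b, expands X N e a x -> expands X N e b x ->
     forall k, in_len N k -> a k = b k).

Definition biorthogonal (X : NormedSpace) (N : option nat) (e : nat -> X)
  (estar : nat -> X -> R) : Prop :=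
  forall (x : X) a, expands X N e a x -> forall k, in_len N k -> estar k x = a k.

Definition is_linear_fun (X : NormedSpace) (f : X -> R) : Prop :=
  forall (a b : R) (x y : X), f (vadd (vscal a x) (vscal b y)) = a * f x + b * f y.

Definition in_dual (X : NormedSpace) (f : X -> R) : Prop :=
  is_linear_fun X f /\ exists C, forall x, Rabs (f x) <= C * vnorm x.

(** Supremum (classical choice of a least upper bound; 0 if there is none). *)
Definition Rsup (E : R -> Prop) : R :=
  epsilon (inhabits 0) (fun r => is_lub E r).

Definition dnorm (X : NormedSpace) (g : X -> R) : R :=
  Rsup (fun r => exists v : X, vnorm v <= 1 /\ r = Rabs (g v)).

Definition inF (X : NormedSpace) (L : nat) (f : nat -> X -> R) (g : X -> R) : Prop :=
  exists c : nat -> R, forall v, g v = gsum 0 Rplus (seq 1 L) (fun k => c k * f k v).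

(** The space F^* (functionals on F), with the dual norm of F ⊆ X^*. *)
Definition Fs_zero (X : NormedSpace) : (X -> R) -> R := fun _ => 0.
Definition Fs_add (X : NormedSpace) (p q : (X -> R) -> R) : (X -> R) -> R :=
  fun g => p g + q g.
Definition Fs_scal (X : NormedSpace) (a : R) (p : (X -> R) -> R) : (X -> R) -> R :=
  fun g => a * p g.
Definition Fs_norm (X : NormedSpace) (L : nat) (f : nat -> X -> R)
  (p : (X -> R) -> R) : R :=
  Rsup (fun r => exists g, inF X L f g /\ dnorm X g <= 1 /\ r = Rabs (p g)).

(** (f_k)_{k=1}^L is a dual skipped lambda-unconditional basis of its span F:
    it is linearly independent (so a basis of F) and its biorthogonal basis
    the functionals f_k^* (1<=k<=L) in F^* is skipped lambda-unconditional. *)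
Definition dual_skipped_uncond_basis (X : NormedSpace) (L : nat)
  (f : nat -> X -> R) (lam : R) : Prop :=
  (forall c : nat -> R,
     (forall v, gsum 0 Rplus (seq 1 L) (fun k => c k * f k v) = 0) ->
     forall k, (1 <= k <= L)%nat -> c k = 0) /\
  exists fstar : nat -> (X -> R) -> R,
    (forall k, (1 <= k <= L)%nat -> forall g h a b,
       inF X L f g -> inF X L f h ->
       fstar k (fun v => a * g v + b * h v) = a * fstar k g + b * fstar k h) /\
    (forall k l, (1 <= k <= L)%nat -> (1 <= l <= L)%nat ->
       fstar k (f l) = if Nat.eqb k l then 1 else 0) /\
    skipped_uncond (Fs_zero X) (Fs_add X) (Fs_scal X) (Fs_norm X L f)
      (Some L) fstar lam.

Definition shifted_seq (X : NormedSpace) (e : nat -> X) (m1 : nat) (x : X) : nat -> X :=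
  fun k => if Nat.eqb k 1 then x else e (m1 + k - 1)%nat.

Definition shifted_len (N : option nat) (m1 : nat) : option nat :=
  match N with Some n => Some (n - m1 + 1)%nat | None => None end.

(** The sequence {x^*, e^*_{m_2}, ..., e^*_{m_{n-1}}, y^*} (length max 2 n). *)
Definition functional_seq (X : NormedSpace) (estar : nat -> X -> R) (m : nat -> nat)
  (n : nat) (xs ys : X -> R) : nat -> X -> R :=
  fun j => if Nat.eqb j 1 then xs
           else if Nat.ltb j (Nat.max 2 n) then estar (m j) else ys.

(* Main.v *)
Require Import Defs.
From Stdlib Require Import Reals List Arith Lra Lia ClassicalEpsilon Classical
  FunctionalExtensionality PropExtensionality.
Open Scope R_scope.

Arguments vadd_assoc {_}. Arguments vadd_comm {_}. Arguments vadd_0 {_}. Arguments vadd_opp {_}.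
Arguments vscal_1 {_}. Arguments vscal_assoc {_}. Arguments vscal_distr_l {_}. Arguments vscal_distr_r {_}.
Arguments vnorm_nonneg {_}. Arguments vnorm_eq0 {_}. Arguments vnorm_scal {_}. Arguments vnorm_triangle {_}.

Lemma Rsup_spec (E : R -> Prop) : (exists x, E x) -> (exists b, forall x, E x -> x <= b) ->
  is_lub E (Rsup E).
Proof.
  intros Hne [b Hb]. unfold Rsup. apply epsilon_spec.
  destruct (completeness E) as [l Hl]; [exists b; intros y Hy; apply Hb, Hy | exact Hne |].
  exists l; exact Hl.
Qed.

Lemma Rsup_ub (E : R -> Prop) x b : (forall y, E y -> y <= b) -> E x -> x <= Rsup E.
Proof. intros Hb Hx. destruct (Rsup_spec E) as [H1 _]; eauto. Qed.

Lemma Rsup_le (E : R -> Prop) b : (exists x, E x) -> (forall y, E y -> y <= b) -> Rsup E <= b.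
Proof. intros Hne Hb. destruct (Rsup_spec E) as [_ H2]; eauto. Qed.

Lemma Rsup_approx (E : R -> Prop) b eps : (exists x, E x) -> (forall y, E y -> y <= b) ->
  0 < eps -> exists x, E x /\ Rsup E - eps < x.
Proof.
  intros Hne Hb He. destruct (Rsup_spec E Hne (ex_intro _ b Hb)) as [H1 H2].
  destruct (classic (exists x, E x /\ Rsup E - eps < x)) as [H|H]; auto.
  exfalso. assert (Rsup E <= Rsup E - eps); [|lra].
  apply H2. intros y Hy. destruct (Rle_dec y (Rsup E - eps)); auto.
  exfalso; apply H; exists y; split; auto; lra.
Qed.

Lemma Rsup_ext (E F : R -> Prop) : (forall x, E x <-> F x) -> Rsup E = Rsup F.
Proof.
  intros H. assert (E = F) by (apply functional_extensionality; intros; apply propositional_extensionality; auto).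
  subst; reflexivity.
Qed.

Lemma vadd_0l {X : NormedSpace} (x : X) : vadd vzero x = x.
Proof. rewrite vadd_comm; apply vadd_0. Qed.

Lemma vadd_cancel_l {X : NormedSpace} (a b c : X) : vadd a b = vadd a c -> b = c.
Proof.
  intros H. rewrite <- (vadd_0l b), <- (vadd_0l c).
  rewrite <- (vadd_opp a), (vadd_comm a (vopp a)), <- !vadd_assoc, H. reflexivity.
Qed.

Lemma vscal_0 {X : NormedSpace} (x : X) : vscal 0 x = vzero.
Proof.
  apply (vadd_cancel_l (vscal 0 x)). rewrite vadd_0, <- vscal_distr_l, Rplus_0_l. reflexivity.
Qed.

Lemma vscal_z {X : NormedSpace} a : vscal a (@vzero X) = vzero.
Proof. rewrite <- (vscal_0 (@vzero X)) at 1. rewrite vscal_assoc, Rmult_0_r. apply vscal_0. Qed.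

Lemma vopp_unique {X : NormedSpace} (x y : X) : vadd x y = vzero -> y = vopp x.
Proof. intros H. apply (vadd_cancel_l x). rewrite H, vadd_opp. reflexivity. Qed.

Lemma vopp_scal {X : NormedSpace} (x : X) : vopp x = vscal (-1) x.
Proof.
  symmetry; apply vopp_unique. rewrite <- (vscal_1 x) at 1.
  rewrite <- vscal_distr_l. replace (1 + -1) with 0 by ring. apply vscal_0.
Qed.

Lemma vnorm_z {X : NormedSpace} : vnorm (@vzero X) = 0.
Proof. rewrite <- (vscal_0 (@vzero X)), vnorm_scal, Rabs_R0; ring. Qed.

Lemma vnorm_opp {X : NormedSpace} (x : X) : vnorm (vopp x) = vnorm x.
Proof. rewrite vopp_scal, vnorm_scal. replace (Rabs (-1)) with 1 by (rewrite Rabs_left; lra). ring. Qed.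

Lemma vsub_diag {X : NormedSpace} (x : X) : vsub x x = vzero.
Proof. apply vadd_opp. Qed.

Lemma vsub_0r {X : NormedSpace} (x : X) : vsub x vzero = x.
Proof. unfold vsub. rewrite vopp_scal, vscal_z, vadd_0. reflexivity. Qed.

Lemma vadd_ACl {X : NormedSpace} (a b c : X) : vadd a (vadd b c) = vadd b (vadd a c).
Proof. rewrite !vadd_assoc, (vadd_comm a b). reflexivity. Qed.

Lemma vadd4 {X : NormedSpace} (a b c d : X) : vadd (vadd a b) (vadd c d) = vadd (vadd a c) (vadd b d).
Proof. rewrite <- !vadd_assoc. f_equal. apply vadd_ACl. Qed.

Lemma vsub_add {X : NormedSpace} (a b c d : X) : vsub (vadd a b) (vadd c d) = vadd (vsub a c) (vsub b d).
Proof.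
  unfold vsub. rewrite !vopp_scal, vscal_distr_r. apply vadd4.
Qed.

Lemma vscal_sub {X : NormedSpace} t (a b : X) : vscal t (vsub a b) = vsub (vscal t a) (vscal t b).
Proof.
  unfold vsub. rewrite vscal_distr_r, !vopp_scal, !vscal_assoc. f_equal; f_equal; ring.
Qed.

Lemma vsub_scal_l {X : NormedSpace} s t (a : X) : vsub (vscal s a) (vscal t a) = vscal (s - t) a.
Proof.
  unfold vsub. rewrite vopp_scal, vscal_assoc, <- vscal_distr_l. f_equal; ring.
Qed.

Lemma vsub_eq0 {X : NormedSpace} (a b : X) : vsub a b = vzero -> a = b.
Proof.
  intros H. unfold vsub in H. pose proof (vopp_unique _ _ H).
  assert (Hoo : forall x : X, vopp (vopp x) = x).
  { intros x. rewrite !vopp_scal, vscal_assoc. replace (-1 * -1) with 1 by ring. apply vscal_1. }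
  rewrite <- (Hoo a), <- H0, Hoo. reflexivity.
Qed.

Lemma vsub_tri {X : NormedSpace} (a b c : X) : vsub a c = vadd (vsub a b) (vsub b c).
Proof.
  unfold vsub. rewrite <- vadd_assoc. f_equal.
  rewrite vadd_assoc, (vadd_comm (vopp b) b), vadd_opp, vadd_0l. reflexivity.
Qed.

Lemma vnorm_sub_sym {X : NormedSpace} (a b : X) : vnorm (vsub a b) = vnorm (vsub b a).
Proof.
  replace (vsub b a) with (vopp (vsub a b)). apply eq_sym, vnorm_opp.
  symmetry; apply vopp_unique. unfold vsub.
  rewrite vadd4, (vadd_comm (vopp b) (vopp a)), vadd4, vadd_opp, vadd_opp, vadd_0. reflexivity.
Qed.

Lemma vnorm_sub_tri {X : NormedSpace} (a b c : X) : vnorm (vsub a c) <= vnorm (vsub a b) + vnorm (vsub b c).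
Proof. rewrite (vsub_tri a b c). apply vnorm_triangle. Qed.

Lemma vnorm_rev_tri {X : NormedSpace} (a b : X) : vnorm a - vnorm b <= vnorm (vsub a b).
Proof.
  pose proof (vnorm_sub_tri a b vzero). rewrite !vsub_0r in H. lra.
Qed.

Lemma vnorm_add_sub {X : NormedSpace} (a b : X) : vnorm a <= vnorm b + vnorm (vsub a b).
Proof. pose proof (vnorm_rev_tri a b). lra. Qed.

Lemma vadd_sub_r {X : NormedSpace} (a b : X) : vadd (vsub a b) b = a.
Proof. unfold vsub. rewrite <- vadd_assoc, (vadd_comm (vopp b) b), vadd_opp, vadd_0. reflexivity. Qed.

Lemma vsub_add_l {X : NormedSpace} (a b : X) : vsub (vadd a b) a = b.
Proof. unfold vsub. rewrite (vadd_comm a b), <- vadd_assoc, vadd_opp, vadd_0. reflexivity. Qed.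

Lemma gsum_nil {T} (z : T) add f : gsum z add nil f = z.
Proof. reflexivity. Qed.
Lemma gsum_cons {T} (z : T) add i l f : gsum z add (i :: l) f = add (f i) (gsum z add l f).
Proof. reflexivity. Qed.

Lemma gsum_ext {T} (z : T) add l f g : (forall i, In i l -> f i = g i) -> gsum z add l f = gsum z add l g.
Proof.
  induction l; simpl; intros H; auto. rewrite H by auto. f_equal. apply IHl; auto.
Qed.

Lemma gsum_app {T} (z : T) add l1 l2 f
  (Hz : forall x, add z x = x) (Ha : forall x y w, add x (add y w) = add (add x y) w) :
  gsum z add (l1 ++ l2) f = add (gsum z add l1 f) (gsum z add l2 f).
Proof. induction l1; simpl; auto. rewrite IHl1, Ha; auto. Qed.

Lemma gsum_map {T} (z : T) add l h f : gsum z add (map h l) f = gsum z add l (fun i => f (h i)).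
Proof. induction l; simpl; auto. rewrite IHl; auto. Qed.

Lemma vgsum_app {X : NormedSpace} l1 l2 (f : nat -> X) :
  gsum vzero vadd (l1 ++ l2) f = vadd (gsum vzero vadd l1 f) (gsum vzero vadd l2 f).
Proof. apply gsum_app; [apply vadd_0l | apply vadd_assoc]. Qed.

Lemma rgsum_app l1 l2 (f : nat -> R) :
  gsum 0 Rplus (l1 ++ l2) f = gsum 0 Rplus l1 f + gsum 0 Rplus l2 f.
Proof. apply gsum_app; intros; ring. Qed.

Lemma vgsum_add {X : NormedSpace} l (f g : nat -> X) :
  gsum vzero vadd l (fun i => vadd (f i) (g i)) = vadd (gsum vzero vadd l f) (gsum vzero vadd l g).
Proof. induction l; simpl. rewrite vadd_0; auto. rewrite IHl. apply vadd4. Qed.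

Lemma vgsum_scal {X : NormedSpace} l t (f : nat -> X) :
  gsum vzero vadd l (fun i => vscal t (f i)) = vscal t (gsum vzero vadd l f).
Proof. induction l; simpl. rewrite vscal_z; auto. rewrite IHl, vscal_distr_r; auto. Qed.

Lemma vgsum_sub {X : NormedSpace} l (f g : nat -> X) :
  gsum vzero vadd l (fun i => vsub (f i) (g i)) = vsub (gsum vzero vadd l f) (gsum vzero vadd l g).
Proof.
  induction l; simpl. rewrite vsub_0r; auto. rewrite IHl. symmetry; apply vsub_add.
Qed.

Lemma vgsum_zero {X : NormedSpace} l (f : nat -> X) : (forall i, In i l -> f i = vzero) ->
  gsum vzero vadd l f = vzero.
Proof. induction l; simpl; intros H; auto. rewrite H, IHl, vadd_0; auto. Qed.

Lemma rgsum_add l (f g : nat -> R) :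
  gsum 0 Rplus l (fun i => f i + g i) = gsum 0 Rplus l f + gsum 0 Rplus l g.
Proof. induction l; simpl. ring. rewrite IHl; ring. Qed.

Lemma rgsum_scal l t (f : nat -> R) :
  gsum 0 Rplus l (fun i => t * f i) = t * gsum 0 Rplus l f.
Proof. induction l; simpl. ring. rewrite IHl; ring. Qed.

Lemma rgsum_zero l (f : nat -> R) : (forall i, In i l -> f i = 0) -> gsum 0 Rplus l f = 0.
Proof. induction l; simpl; intros H; auto. rewrite H, IHl; auto; ring. Qed.

Lemma rgsum_abs l (f : nat -> R) : Rabs (gsum 0 Rplus l f) <= gsum 0 Rplus l (fun i => Rabs (f i)).
Proof.
  induction l; simpl. rewrite Rabs_R0; lra.
  eapply Rle_trans. apply Rabs_triang. lra.
Qed.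

Lemma rgsum_le l (f g : nat -> R) : (forall i, In i l -> f i <= g i) -> gsum 0 Rplus l f <= gsum 0 Rplus l g.
Proof. induction l; simpl; intros H. lra. pose proof (H a (or_introl eq_refl)). pose proof (IHl (fun i Hi => H i (or_intror Hi))). lra. Qed.

Lemma vgsum_norm {X : NormedSpace} l (f : nat -> X) :
  vnorm (gsum vzero vadd l f) <= gsum 0 Rplus l (fun i => vnorm (f i)).
Proof.
  induction l; simpl. rewrite vnorm_z; lra.
  eapply Rle_trans. apply vnorm_triangle. lra.
Qed.

Lemma lin_add {X : NormedSpace} (f : X -> R) : is_linear_fun X f -> forall x y, f (vadd x y) = f x + f y.
Proof. intros H x y. pose proof (H 1 1 x y). rewrite !vscal_1 in H0. rewrite H0; ring. Qed.

Lemma lin_scal {X : NormedSpace} (f : X -> R) : is_linear_fun X f -> forall a x, f (vscal a x) = a * f x.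
Proof. intros H a x. pose proof (H a 0 x x). rewrite vscal_0, vadd_0 in H0. rewrite H0; ring. Qed.

Lemma lin_zero {X : NormedSpace} (f : X -> R) : is_linear_fun X f -> f vzero = 0.
Proof. intros H. rewrite <- (vscal_0 vzero), (lin_scal f H). ring. Qed.

Lemma lin_sub {X : NormedSpace} (f : X -> R) : is_linear_fun X f -> forall x y, f (vsub x y) = f x - f y.
Proof. intros H x y. unfold vsub. rewrite lin_add, vopp_scal, lin_scal by auto. ring. Qed.

Lemma lin_gsum {X : NormedSpace} (f : X -> R) : is_linear_fun X f -> forall l (g : nat -> X),
  f (gsum vzero vadd l g) = gsum 0 Rplus l (fun i => f (g i)).
Proof. intros H l g. induction l; simpl. apply lin_zero; auto. rewrite lin_add, IHl; auto. Qed.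

Lemma mk_lin {X : NormedSpace} (f : X -> R) : (forall x y, f (vadd x y) = f x + f y) ->
  (forall a x, f (vscal a x) = a * f x) -> is_linear_fun X f.
Proof. intros H1 H2 a b x y. rewrite H1, !H2. reflexivity. Qed.

Definition inb (N : option nat) (k : nat) : bool :=
  Nat.leb 1 k && match N with Some n => Nat.leb k n | None => true end.

Lemma inb_spec N k : inb N k = true <-> in_len N k.
Proof.
  unfold inb, in_len. destruct N; rewrite Bool.andb_true_iff, Nat.leb_le; [rewrite Nat.leb_le|]; tauto.
Qed.

Lemma inb_false N k : inb N k = false <-> ~ in_len N k.
Proof. rewrite <- inb_spec. destruct (inb N k); split; congruence. Qed.

Definition comb {X : NormedSpace} (e : nat -> X) (c : nat -> R) (p : nat) : X :=
  gsum vzero vadd (seq 1 p) (fun k => vscal (c k) (e k)).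

Definition cf {X : NormedSpace} (N : option nat) (estar : nat -> X -> R) (x : X) (k : nat) : R :=
  if inb N k then estar k x else 0.

Definition Sp {X : NormedSpace} N (e : nat -> X) estar (p : nat) (x : X) : X :=
  comb e (cf N estar x) p.

Definition zero_out (N : option nat) (c : nat -> R) : Prop := forall k, ~ in_len N k -> c k = 0.

Lemma comb_0 {X : NormedSpace} (e : nat -> X) c : comb e c 0 = vzero.
Proof. reflexivity. Qed.

Lemma comb_S {X : NormedSpace} (e : nat -> X) c p :
  comb e c (S p) = vadd (comb e c p) (vscal (c (S p)) (e (S p))).
Proof.
  unfold comb. rewrite seq_S, vgsum_app. simpl. rewrite vadd_0. reflexivity.
Qed.

Lemma comb_ext {X : NormedSpace} (e : nat -> X) c d p :
  (forall k, (1 <= k <= p)%nat -> c k = d k) -> comb e c p = comb e d p.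
Proof.
  intros H. unfold comb. apply gsum_ext. intros i Hi. apply in_seq in Hi. rewrite H by lia. auto.
Qed.

Lemma comb_stable {X : NormedSpace} (e : nat -> X) c p q :
  (p <= q)%nat -> (forall k, (p < k <= q)%nat -> c k = 0) -> comb e c q = comb e c p.
Proof.
  intros Hpq. induction Hpq; intros H; auto.
  rewrite comb_S, H by lia. rewrite vscal_0, vadd_0. apply IHHpq. intros; apply H; lia.
Qed.

Lemma comb_lin {X : NormedSpace} (e : nat -> X) c d a b p :
  comb e (fun i => a * c i + b * d i) p = vadd (vscal a (comb e c p)) (vscal b (comb e d p)).
Proof.
  unfold comb. rewrite <- !vgsum_scal, <- vgsum_add. apply gsum_ext. intros i _.
  rewrite vscal_distr_l, !vscal_assoc. reflexivity.
Qed.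

Lemma comb_zero {X : NormedSpace} (e : nat -> X) c p : (forall k, c k = 0) -> comb e c p = vzero.
Proof. intros H. unfold comb. apply vgsum_zero. intros i _. rewrite H. apply vscal_0. Qed.

Lemma vlim_unique {X : NormedSpace} (a b : X) : (forall eps, 0 < eps -> vnorm (vsub a b) < eps) -> a = b.
Proof.
  intros H. apply vsub_eq0, vnorm_eq0. pose proof (vnorm_nonneg (vsub a b)).
  destruct H0 as [H0|H0]; auto. specialize (H _ H0). lra.
Qed.

Lemma expands_comb (X : NormedSpace) N (e : nat -> X) c p :
  zero_out N c -> (forall k, (p < k)%nat -> c k = 0) -> expands X N e c (comb e c p).
Proof.
  intros Hz Hp. destruct N as [n|]; simpl.
  - destruct (le_lt_dec p n).
    + symmetry; apply comb_stable; auto. intros; apply Hp; lia.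
    + apply comb_stable; [lia|]. intros k Hk. apply Hz. unfold in_len. lia.
  - intros eps He. exists p. intros q Hq. fold (comb e c q). rewrite (comb_stable e c p q Hq).
    rewrite vsub_diag, vnorm_z; auto. intros; apply Hp; lia.
Qed.

Lemma estar_comb (X : NormedSpace) N (e : nat -> X) estar :
  biorthogonal X N e estar -> forall c p k, zero_out N c -> in_len N k ->
  estar k (comb e c p) = if Nat.leb k p then c k else 0.
Proof.
  intros Hb c p k Hz Hk.
  set (c' := fun i => if Nat.leb i p then c i else 0).
  assert (comb e c p = comb e c' p) as ->.
  { apply comb_ext. intros i Hi. unfold c'. destruct (Nat.leb_spec i p); auto; lia. }
  apply (Hb _ c'); auto. apply expands_comb.
  - intros i Hi. unfold c'. rewrite Hz; auto. destruct (Nat.leb i p); auto.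
  - intros i Hi. unfold c'. destruct (Nat.leb_spec i p); auto; lia.
Qed.

Lemma expands_lin (X : NormedSpace) N (e : nat -> X) x y al be a b :
  expands X N e al x -> expands X N e be y ->
  expands X N e (fun i => a * al i + b * be i) (vadd (vscal a x) (vscal b y)).
Proof.
  destruct N as [n|]; simpl; intros Hx Hy.
  - fold (comb e al n) in Hx. fold (comb e be n) in Hy. fold (comb e (fun i => a * al i + b * be i) n).
    rewrite comb_lin, Hx, Hy. reflexivity.
  - intros eps He.
    set (d := eps / (2 * (Rabs a + Rabs b + 1))).
    assert (Hd : 0 < d). { unfold d. apply Rdiv_lt_0_compat; auto. pose proof (Rabs_pos a); pose proof (Rabs_pos b); lra. }
    destruct (Hx d Hd) as [M1 H1]. destruct (Hy d Hd) as [M2 H2].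
    exists (max M1 M2). intros p Hp.
    fold (comb e (fun i => a * al i + b * be i) p). rewrite comb_lin.
    rewrite vsub_add, <- !vscal_sub.
    eapply Rle_lt_trans. apply vnorm_triangle. rewrite !vnorm_scal.
    specialize (H1 p ltac:(lia)). specialize (H2 p ltac:(lia)). fold (comb e al p) in H1. fold (comb e be p) in H2.
    pose proof (Rabs_pos a); pose proof (Rabs_pos b).
    assert (Rabs a * vnorm (vsub (comb e al p) x) <= Rabs a * d) by (apply Rmult_le_compat_l; lra).
    assert (Rabs b * vnorm (vsub (comb e be p) y) <= Rabs b * d) by (apply Rmult_le_compat_l; lra).
    assert ((Rabs a + Rabs b) * d < eps).
    { unfold d. apply (Rmult_lt_reg_r (2 * (Rabs a + Rabs b + 1))). lra.
      field_simplify; try lra. nra. }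
    nra.
Qed.

Lemma estar_lin (X : NormedSpace) N (e : nat -> X) estar :
  is_basis X N e -> biorthogonal X N e estar ->
  forall k, in_len N k -> is_linear_fun X (estar k).
Proof.
  intros [Hex _] Hb k Hk a b x y.
  destruct (Hex x) as [al Hal]. destruct (Hex y) as [be Hbe].
  rewrite (Hb _ _ (expands_lin X N e x y al be a b Hal Hbe) k Hk).
  rewrite (Hb _ _ Hal k Hk), (Hb _ _ Hbe k Hk). reflexivity.
Qed.

Lemma cf_lin (X : NormedSpace) N (e : nat -> X) estar :
  is_basis X N e -> biorthogonal X N e estar ->
  forall k, is_linear_fun X (fun x => cf N estar x k).
Proof.
  intros Hb Ho k a b x y. unfold cf. destruct (inb N k) eqn:E.
  - apply inb_spec in E. apply (estar_lin X N e estar Hb Ho k E).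
  - ring.
Qed.

Lemma cf_zero_out {X : NormedSpace} N estar (x : X) : zero_out N (cf N estar x).
Proof. intros k Hk. unfold cf. apply inb_false in Hk. rewrite Hk. auto. Qed.

Lemma Sp_lin (X : NormedSpace) N (e : nat -> X) estar :
  is_basis X N e -> biorthogonal X N e estar ->
  forall p a b x y, Sp N e estar p (vadd (vscal a x) (vscal b y)) =
     vadd (vscal a (Sp N e estar p x)) (vscal b (Sp N e estar p y)).
Proof.
  intros Hb Ho p a b x y. unfold Sp. rewrite <- comb_lin. apply comb_ext. intros k _.
  apply (cf_lin X N e estar Hb Ho k).
Qed.

Lemma Sp_sub (X : NormedSpace) N (e : nat -> X) estar :
  is_basis X N e -> biorthogonal X N e estar ->
  forall p x y, Sp N e estar p (vsub x y) = vsub (Sp N e estar p x) (Sp N e estar p y).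
Proof.
  intros Hb Ho p x y.
  assert (vsub x y = vadd (vscal 1 x) (vscal (-1) y)) as ->.
  { unfold vsub. rewrite vscal_1, vopp_scal. reflexivity. }
  rewrite Sp_lin by auto. unfold vsub. rewrite vscal_1, vopp_scal. reflexivity.
Qed.

Lemma Sp_scal (X : NormedSpace) N (e : nat -> X) estar :
  is_basis X N e -> biorthogonal X N e estar ->
  forall p a x, Sp N e estar p (vscal a x) = vscal a (Sp N e estar p x).
Proof.
  intros Hb Ho p a x.
  assert (vscal a x = vadd (vscal a x) (vscal 0 x)) as -> by (rewrite vscal_0, vadd_0; auto).
  rewrite Sp_lin by auto. rewrite vscal_0, vadd_0. reflexivity.
Qed.

Lemma Sp_conv (X : NormedSpace) N (e : nat -> X) estar :
  is_basis X N e -> biorthogonal X N e estar ->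
  forall x eps, 0 < eps -> exists M, forall p, (M <= p)%nat -> vnorm (vsub (Sp N e estar p x) x) < eps.
Proof.
  intros [Hex _] Ho x eps He. destruct (Hex x) as [al Hal].
  destruct N as [n|].
  - exists n. intros p Hp. unfold Sp. rewrite comb_stable with (p := n); auto.
    + simpl in Hal. fold (comb e al n) in Hal.
      rewrite (comb_ext e _ al). rewrite <- Hal, vsub_diag, vnorm_z; auto.
      intros k Hk. unfold cf. assert (in_len (Some n) k) by (unfold in_len; lia).
      rewrite (proj2 (inb_spec _ _) H). apply (Ho _ _ Hal); auto.
    + intros k Hk. apply cf_zero_out. unfold in_len. lia.
  - destruct (Hal eps He) as [M HM]. exists M. intros p Hp. unfold Sp.
    rewrite (comb_ext e _ al). apply HM; auto.
    intros k Hk. unfold cf. assert (in_len None k) by (unfold in_len; split; auto; lia).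
    rewrite (proj2 (inb_spec _ _) H). apply (Ho _ _ Hal); auto.
Qed.

Lemma Sp_S {X : NormedSpace} N (e : nat -> X) estar p x :
  Sp N e estar (S p) x = vadd (Sp N e estar p x) (vscal (cf N estar x (S p)) (e (S p))).
Proof. apply comb_S. Qed.

Definition delta (k : nat) : nat -> R := fun i => if Nat.eqb i k then 1 else 0.

Lemma comb_delta {X : NormedSpace} (e : nat -> X) k : (1 <= k)%nat -> comb e (delta k) k = e k.
Proof.
  intros Hk. destruct k; [lia|]. rewrite comb_S. rewrite (comb_ext e _ (fun _ => 0)).
  - rewrite comb_zero by auto. unfold delta. rewrite Nat.eqb_refl, vadd_0l, vscal_1. auto.
  - intros i Hi. unfold delta. destruct (Nat.eqb_spec i (S k)); auto; lia.
Qed.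

Lemma delta_zero_out N k : in_len N k -> zero_out N (delta k).
Proof. intros Hk i Hi. unfold delta. destruct (Nat.eqb_spec i k); subst; tauto. Qed.

Lemma estar_e (X : NormedSpace) N (e : nat -> X) estar :
  biorthogonal X N e estar -> forall k i, in_len N k -> in_len N i ->
  estar k (e i) = if Nat.eqb k i then 1 else 0.
Proof.
  intros Ho k i Hk Hi. rewrite <- (comb_delta e i) by (destruct Hi; auto).
  rewrite (estar_comb X N e estar Ho) by (auto; apply delta_zero_out; auto).
  unfold delta. destruct (Nat.eqb_spec k i); subst.
  - rewrite Nat.leb_refl. auto.
  - destruct (Nat.leb k i); auto.
Qed.

Lemma e_nonzero (X : NormedSpace) N (e : nat -> X) estar :
  is_basis X N e -> biorthogonal X N e estar -> forall k, in_len N k -> e k <> vzero.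
Proof.
  intros Hb Ho k Hk He. pose proof (estar_e X N e estar Ho k k Hk Hk).
  rewrite Nat.eqb_refl, He, (lin_zero _ (estar_lin X N e estar Hb Ho k Hk)) in H. lra.
Qed.

Lemma conv_coef (X : NormedSpace) N (e : nat -> X) estar :
  biorthogonal X N e estar -> forall c z, zero_out N c ->
  (forall eps, 0 < eps -> exists M, forall p, (M <= p)%nat -> vnorm (vsub (comb e c p) z) < eps) ->
  forall k, in_len N k -> estar k z = c k.
Proof.
  intros Ho c z Hz Hc k Hk. apply (Ho _ c); auto. destruct N as [n|]; simpl.
  - symmetry. apply vlim_unique. intros eps He. destruct (Hc eps He) as [M HM].
    specialize (HM (max M n) ltac:(lia)). rewrite comb_stable with (p := n) in HM; auto. lia.
    intros i Hi. apply Hz. unfold in_len. lia.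
  - exact Hc.
Qed.

Lemma choice_fun {A B : Type} (b0 : B) (P : A -> B -> Prop) :
  (forall a, exists b, P a b) -> exists f : A -> B, forall a, P a (f a).
Proof.
  intros H. exists (fun a => epsilon (inhabits b0) (P a)). intros a. apply epsilon_spec, H.
Qed.

Fixpoint iter_seq {A : Type} (a0 : A) (f : nat -> A -> A) (n : nat) : A :=
  match n with O => a0 | S i => f i (iter_seq a0 f i) end.

Lemma rgsum_nonneg l (f : nat -> R) : (forall i, 0 <= f i) -> 0 <= gsum 0 Rplus l f.
Proof. intros Hf. induction l; simpl; [lra|]. specialize (Hf a). lra. Qed.

Lemma gsum_term_le l (f : nat -> R) p : (forall i, 0 <= f i) -> In p l -> f p <= gsum 0 Rplus l f.
Proof.
  intros Hf. induction l; simpl; [tauto|]. intros [->|H].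
  - pose proof (rgsum_nonneg l f Hf). lra.
  - specialize (IHl H). specialize (Hf a). lra.
Qed.

Lemma Sp_bounded (X : NormedSpace) N (e : nat -> X) estar :
  is_basis X N e -> biorthogonal X N e estar ->
  forall x, exists B, forall p, vnorm (Sp N e estar p x) <= B.
Proof.
  intros Hb Ho x. destruct (Sp_conv X N e estar Hb Ho x 1 ltac:(lra)) as [M HM].
  exists (vnorm x + 1 + gsum 0 Rplus (seq 0 M) (fun p => vnorm (Sp N e estar p x))).
  intros p. pose proof (rgsum_nonneg (seq 0 M) (fun p => vnorm (Sp N e estar p x)) (fun i => vnorm_nonneg _)).
  destruct (le_lt_dec M p).
  - specialize (HM p l). pose proof (vnorm_add_sub (Sp N e estar p x) x). pose proof (vnorm_nonneg x). lra.
  - pose proof (gsum_term_le (seq 0 M) (fun p => vnorm (Sp N e estar p x)) p (fun i => vnorm_nonneg _)).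
    assert (In p (seq 0 M)) by (apply in_seq; lia). specialize (H0 H1). pose proof (vnorm_nonneg x). simpl in H0. lra.
Qed.

Lemma half_pow_small eps : 0 < eps -> exists i, (1/2)^i < eps.
Proof.
  intros He. destruct (pow_lt_1_zero (1/2) ltac:(rewrite Rabs_right; lra) eps He) as [n Hn].
  exists n. specialize (Hn n ltac:(lia)). rewrite Rabs_right in Hn; auto. apply Rle_ge, pow_le; lra.
Qed.

Lemma baire (X : NormedSpace) (HX : complete X) (K : R -> X -> Prop) :
  (forall M M' z, M <= M' -> K M z -> K M' z) -> (forall x, exists B, K B x) ->
  exists M x0 r, 0 < r /\ forall y, vnorm (vsub y x0) < r -> forall eps, 0 < eps ->
     exists z, K M z /\ vnorm (vsub z y) < eps.
Proof.
  intros Hmono Hcov. apply NNPP. intros Hneg.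
  assert (Hn : forall M x0 r, 0 < r -> exists y, vnorm (vsub y x0) < r /\
            exists ep, 0 < ep /\ forall z, K M z -> ep <= vnorm (vsub z y)).
  { intros M x0 r Hr. apply NNPP; intros Hc. apply Hneg. exists M, x0, r. split; auto.
    intros y Hy ep Hep. apply NNPP; intros Hz. apply Hc. exists y; split; auto.
    exists ep; split; auto. intros z Kz. destruct (Rle_dec ep (vnorm (vsub z y))); auto.
    exfalso; apply Hz; exists z; split; auto; lra. }
  assert (Hstep : forall (i : nat) (pr : X * R), exists q : X * R, 0 < snd pr ->
     (0 < snd q /\ vnorm (vsub (fst q) (fst pr)) + 2 * snd q <= snd pr /\
      forall z, K (INR i) z -> 2 * snd q <= vnorm (vsub z (fst q)))).
  { intros i [x0 r]. simpl. destruct (Rlt_dec 0 r) as [Hr|Hr].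
    - destruct (Hn (INR i) x0 r Hr) as [y [Hy [ep [Hep Hz]]]].
      exists (y, Rmin ep (r - vnorm (vsub y x0)) / 2). simpl. intros _.
      pose proof (Rmin_l ep (r - vnorm (vsub y x0))). pose proof (Rmin_r ep (r - vnorm (vsub y x0))).
      assert (0 < Rmin ep (r - vnorm (vsub y x0))) by (apply Rmin_glb_lt; lra).
      repeat split; try lra. intros z Kz. specialize (Hz z Kz). lra.
    - exists (x0, r). simpl. intros; lra. }
  destruct (choice_fun ((@vzero X), 0) (fun (ip : nat * (X * R)) (q : X * R) => 0 < snd (snd ip) ->
     (0 < snd q /\ vnorm (vsub (fst q) (fst (snd ip))) + 2 * snd q <= snd (snd ip) /\
      forall z, K (INR (fst ip)) z -> 2 * snd q <= vnorm (vsub z (fst q)))))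
    as [f Hf].
  { intros [i pr]. apply Hstep. }
  set (u := iter_seq ((@vzero X), 1) (fun i pr => f (i, pr))).
  set (y := fun i => fst (u i)). set (r := fun i => snd (u i)).
  assert (Hpos : forall i, 0 < r i).
  { intros i; induction i. unfold r; simpl; lra. exact (proj1 (Hf (i, u i) IHi)). }
  assert (Hu : forall i, 0 < r i /\ vnorm (vsub (y (S i)) (y i)) + 2 * r (S i) <= r i /\
                 (forall z, K (INR i) z -> 2 * r (S i) <= vnorm (vsub z (y (S i))))).
  { intros i. split. apply Hpos. exact (proj2 (Hf (i, u i) (Hpos i))). }
  assert (Hr : forall i, r i <= (1/2)^i).
  { intros i; induction i. simpl. unfold r, u; simpl; lra.
    destruct (Hu i) as [H1 [H2 _]]. pose proof (vnorm_nonneg (vsub (y (S i)) (y i))). simpl. lra. }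
  assert (Hd : forall i l, (i <= l)%nat -> vnorm (vsub (y l) (y i)) <= r i - r l).
  { intros i l Hil. induction Hil. rewrite vsub_diag, vnorm_z; lra.
    destruct (Hu m) as [H1 [H2 _]]. pose proof (vnorm_sub_tri (y (S m)) (y m) (y i)). pose proof (Hpos (S m)). lra. }
  assert (Hcau : forall ep, 0 < ep -> exists M, forall p q, (M <= p)%nat -> (M <= q)%nat ->
            vnorm (vsub (y p) (y q)) < ep).
  { intros ep Hep. destruct (half_pow_small (ep/2)) as [i Hi]. lra.
    exists i. intros p q Hp Hq. pose proof (Hd i p Hp). pose proof (Hd i q Hq).
    pose proof (vnorm_sub_tri (y p) (y i) (y q)). rewrite (vnorm_sub_sym (y i) (y q)) in H1.
    pose proof (Hu p). pose proof (Hu q). pose proof (Hr i). lra. }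
  destruct (HX y Hcau) as [x Hx].
  assert (Hxi : forall i, vnorm (vsub x (y i)) <= r i).
  { intros i. apply Rnot_lt_le. intros Hlt.
    destruct (Hx (vnorm (vsub x (y i)) - r i) ltac:(lra)) as [M HM].
    specialize (HM (max M i) ltac:(lia)). pose proof (Hd i (max M i) ltac:(lia)).
    pose proof (vnorm_sub_tri x (y (max M i)) (y i)). rewrite vnorm_sub_sym in HM.
    pose proof (Hu (max M i)). lra. }
  destruct (Hcov x) as [B HB]. destruct (INR_unbounded B) as [i Hi].
  destruct (Hu i) as [_ [_ H3]]. specialize (H3 x (Hmono B (INR i) x ltac:(lra) HB)).
  specialize (Hxi (S i)). destruct (Hu (S i)). lra.
Qed.

Lemma vnorm_sub_le {X : NormedSpace} (a b : X) : vnorm (vsub a b) <= vnorm a + vnorm b.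
Proof. unfold vsub. eapply Rle_trans. apply vnorm_triangle. rewrite vnorm_opp. lra. Qed.

Lemma Sp_zero (X : NormedSpace) N (e : nat -> X) estar :
  is_basis X N e -> biorthogonal X N e estar -> forall p, Sp N e estar p vzero = vzero.
Proof.
  intros Hb Ho p. rewrite <- (vscal_0 vzero), (Sp_scal X N e estar Hb Ho). rewrite !vscal_0. auto.
Qed.

Lemma comb_conv {X : NormedSpace} (e : nat -> X) (c : nat -> nat -> R) (a : nat -> R) :
  (forall k, Un_cv (fun l => c l k) (a k)) ->
  forall p eps, 0 < eps -> exists L, forall l, (L <= l)%nat -> vnorm (vsub (comb e (c l) p) (comb e a p)) < eps.
Proof.
  intros Hc p. induction p; intros eps He.
  - exists 0%nat. intros l _. rewrite !comb_0, vsub_diag, vnorm_z. auto.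
  - destruct (IHp (eps/2) ltac:(lra)) as [L1 H1].
    set (d := eps / (2 * (vnorm (e (S p)) + 1))).
    assert (Hd : 0 < d). { unfold d. apply Rdiv_lt_0_compat; auto. pose proof (vnorm_nonneg (e (S p))); lra. }
    destruct (Hc (S p) d Hd) as [L2 H2].
    exists (max L1 L2). intros l Hl. rewrite !comb_S, vsub_add, vsub_scal_l.
    eapply Rle_lt_trans. apply vnorm_triangle. rewrite vnorm_scal.
    specialize (H1 l ltac:(lia)). specialize (H2 l ltac:(lia)). unfold Rdist in H2.
    pose proof (vnorm_nonneg (e (S p))).
    assert (Rabs (c l (S p) - a (S p)) * vnorm (e (S p)) <= d * vnorm (e (S p))) by (apply Rmult_le_compat_r; lra).
    assert (d * vnorm (e (S p)) < eps / 2).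
    { unfold d. apply (Rmult_lt_reg_r (2 * (vnorm (e (S p)) + 1))). lra. field_simplify; lra. }
    lra.
Qed.

Lemma vsub_comm_tri {X : NormedSpace} (a b : X) : vnorm (vsub a b) <= vnorm (vsub a b). Proof. lra. Qed.

Lemma uc_limit (X : NormedSpace) (HX : complete X) N (e : nat -> X) estar :
  is_basis X N e -> biorthogonal X N e estar ->
  forall (Y : nat -> X) (dl : nat -> R) (y : X),
  (forall eps, 0 < eps -> exists L0, forall l, (L0 <= l)%nat -> dl l < eps) ->
  (forall l l' p, (l <= l')%nat -> vnorm (vsub (Sp N e estar p (Y l')) (Sp N e estar p (Y l))) <= dl l) ->
  (forall eps, 0 < eps -> exists L, forall l, (L <= l)%nat -> vnorm (vsub (Y l) y) < eps) ->
  forall l p, vnorm (vsub (Sp N e estar p y) (Sp N e estar p (Y l))) <= dl l.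
Proof.
  intros Hb Ho Y dl y Hdl HU HY.
  set (SS := Sp N e estar).
  assert (HdlN : forall l, 0 <= dl l).
  { intros l. pose proof (HU l l 0%nat (le_n l)). pose proof (vnorm_nonneg (vsub (SS 0%nat (Y l)) (SS 0%nat (Y l)))). unfold SS in *. lra. }
  assert (Hcoef : forall l l' k, (l <= l')%nat -> in_len N k ->
     Rabs (cf N estar (Y l') k - cf N estar (Y l) k) * vnorm (e k) <= 2 * dl l).
  { intros l l' k Hll' Hk. destruct k as [|k]; [destruct Hk; lia|].
    set (D := vsub (Y l') (Y l)).
    assert (Hc : cf N estar D (S k) = cf N estar (Y l') (S k) - cf N estar (Y l) (S k)).
    { unfold D. apply (lin_sub _ (cf_lin X N e estar Hb Ho (S k))). }
    assert (HS : forall p, SS p D = vsub (SS p (Y l')) (SS p (Y l))).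
    { intros p. unfold D, SS. apply Sp_sub; auto. }
    rewrite <- Hc, <- vnorm_scal.
    assert (vscal (cf N estar D (S k)) (e (S k)) = vsub (SS (S k) D) (SS k D)) as ->.
    { unfold SS. rewrite Sp_S. rewrite vsub_add_l. reflexivity. }
    eapply Rle_trans. apply vnorm_sub_le. rewrite !HS.
    pose proof (HU l l' (S k) Hll'). pose proof (HU l l' k Hll'). unfold SS in *. lra. }
  assert (Hlim : forall k, exists a, Un_cv (fun l => cf N estar (Y l) k) a).
  { intros k. destruct (classic (in_len N k)) as [Hk|Hk].
    - assert (Hek : 0 < vnorm (e k)).
      { pose proof (vnorm_nonneg (e k)). destruct H; auto. exfalso.
        apply (e_nonzero X N e estar Hb Ho k Hk). apply vnorm_eq0; auto. }
      destruct (R_complete (fun l => cf N estar (Y l) k)) as [a Ha]; [|exists a; exact Ha].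
      intros eps He. destruct (Hdl (eps * vnorm (e k) / 5)) as [l0 Hl0].
      2:{ specialize (Hl0 l0 (le_n _)).
      exists l0. intros n m Hn Hm. unfold Rdist.
      pose proof (Hcoef l0 n k Hn Hk). pose proof (Hcoef l0 m k Hm Hk).
      assert (Rabs (cf N estar (Y n) k - cf N estar (Y l0) k) <= 2 * dl l0 / vnorm (e k)).
      { apply (Rmult_le_reg_r (vnorm (e k))); auto. field_simplify; lra. }
      assert (Rabs (cf N estar (Y m) k - cf N estar (Y l0) k) <= 2 * dl l0 / vnorm (e k)).
      { apply (Rmult_le_reg_r (vnorm (e k))); auto. field_simplify; lra. }
      assert (4 * dl l0 / vnorm (e k) < eps).
      { assert (0 < eps * vnorm (e k)) by (apply Rmult_lt_0_compat; lra).
        apply (Rmult_lt_reg_r (vnorm (e k))); auto. field_simplify; lra. }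
      replace (cf N estar (Y n) k - cf N estar (Y m) k) with
        ((cf N estar (Y n) k - cf N estar (Y l0) k) - (cf N estar (Y m) k - cf N estar (Y l0) k)) by ring.
      eapply Rle_lt_trans. apply Rabs_triang. rewrite Rabs_Ropp.
      assert (2 * dl l0 / vnorm (e k) + 2 * dl l0 / vnorm (e k) = 4 * dl l0 / vnorm (e k)) by (field; lra).
      lra. }
      apply Rdiv_lt_0_compat; [apply Rmult_lt_0_compat|]; lra.
    - exists 0. intros eps He. exists 0%nat. intros n _. unfold cf, Rdist.
      apply inb_false in Hk. rewrite Hk. rewrite Rminus_0_r, Rabs_R0. lra. }
  destruct (choice_fun 0 (fun k a => Un_cv (fun l => cf N estar (Y l) k) a) Hlim) as [a Ha].
  assert (Hza : zero_out N a).
  { intros k Hk. apply (UL_sequence (fun l => cf N estar (Y l) k)); auto.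
    intros eps He. exists 0%nat. intros n _. unfold cf, Rdist. apply inb_false in Hk. rewrite Hk.
    rewrite Rminus_0_r, Rabs_R0. lra. }
  set (T := comb e a).
  assert (HST : forall p eps, 0 < eps -> exists L, forall l, (L <= l)%nat -> vnorm (vsub (SS p (Y l)) (T p)) < eps).
  { intros p eps He. apply (comb_conv e (fun l => cf N estar (Y l)) a Ha p eps He). }
  assert (HdT : forall l p, vnorm (vsub (SS p (Y l)) (T p)) <= dl l).
  { intros l p. apply Rle_plus_epsilon. intros eta Heta. destruct (HST p eta Heta) as [L HL].
    pose proof (HL (max L l) ltac:(lia)). pose proof (HU l (max L l) p ltac:(lia)).
    pose proof (vnorm_sub_tri (SS p (Y l)) (SS p (Y (max L l))) (T p)).
    rewrite vnorm_sub_sym in H0. unfold SS in *. lra. }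
  assert (HTc : forall eps, 0 < eps -> exists M, forall p q, (M <= p)%nat -> (M <= q)%nat ->
            vnorm (vsub (T p) (T q)) < eps).
  { intros eps He. destruct (Hdl (eps/4) ltac:(lra)) as [l Hl]. specialize (Hl l (le_n _)).
    destruct (Sp_conv X N e estar Hb Ho (Y l) (eps/4) ltac:(lra)) as [M HM].
    exists M. intros p q Hp Hq.
    pose proof (HdT l p). pose proof (HdT l q). pose proof (HM p Hp). pose proof (HM q Hq).
    pose proof (vnorm_sub_tri (T p) (SS p (Y l)) (T q)).
    pose proof (vnorm_sub_tri (SS p (Y l)) (Y l) (T q)).
    pose proof (vnorm_sub_tri (Y l) (SS q (Y l)) (T q)).
    pose proof (vnorm_sub_sym (T p) (SS p (Y l))). pose proof (vnorm_sub_sym (Y l) (SS q (Y l))).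
    unfold SS in *. lra. }
  destruct (HX T HTc) as [w Hw].
  assert (HYw : forall l, vnorm (vsub (Y l) w) <= dl l).
  { intros l. apply Rle_plus_epsilon. intros eta Heta.
    destruct (Sp_conv X N e estar Hb Ho (Y l) (eta/2) ltac:(lra)) as [M1 HM1].
    destruct (Hw (eta/2) ltac:(lra)) as [M2 HM2].
    pose proof (HM1 (max M1 M2) ltac:(lia)). pose proof (HM2 (max M1 M2) ltac:(lia)).
    pose proof (HdT l (max M1 M2)).
    pose proof (vnorm_sub_tri (Y l) (SS (max M1 M2) (Y l)) w).
    pose proof (vnorm_sub_tri (SS (max M1 M2) (Y l)) (T (max M1 M2)) w).
    rewrite vnorm_sub_sym in H. unfold SS in *. lra. }
  assert (Hyw : y = w).
  { apply vlim_unique. intros eps He. destruct (Hdl (eps/2) ltac:(lra)) as [l1 Hl1].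
    destruct (HY (eps/2) ltac:(lra)) as [L HL].
    specialize (Hl1 (max l1 L) ltac:(lia)). specialize (HL (max l1 L) ltac:(lia)).
    pose proof (HYw (max l1 L)). pose proof (vnorm_sub_tri y (Y (max l1 L)) w).
    rewrite vnorm_sub_sym in HL. lra. }
  subst w.
  assert (HSy : forall p, SS p y = T p).
  { intros p. unfold SS, Sp, T. apply comb_ext. intros k Hk. unfold cf.
    destruct (inb N k) eqn:E.
    - apply inb_spec in E. apply (conv_coef X N e estar Ho a y Hza Hw k E).
    - symmetry; apply Hza. apply inb_false; auto. }
  intros l p. rewrite HSy, vnorm_sub_sym. apply HdT.
Qed.

Lemma vopp_add {X : NormedSpace} (a b : X) : vopp (vadd a b) = vadd (vopp a) (vopp b).
Proof. rewrite !vopp_scal. apply vscal_distr_r. Qed.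

Lemma vopp_opp {X : NormedSpace} (a : X) : vopp (vopp a) = a.
Proof. rewrite !vopp_scal, vscal_assoc. replace (-1 * -1) with 1 by ring. apply vscal_1. Qed.

Lemma vsub_ident1 {X : NormedSpace} (z1 z2 x0 y : X) :
  vsub (vsub z1 z2) y = vsub (vsub z1 (vadd x0 y)) (vsub z2 x0).
Proof.
  unfold vsub. rewrite !vopp_add, vopp_opp. rewrite vadd4. f_equal.
  rewrite vadd_comm, vadd_assoc, vadd_opp, vadd_0l. reflexivity.
Qed.

Lemma Sp_dense (X : NormedSpace) (HX : complete X) N (e : nat -> X) estar :
  is_basis X N e -> biorthogonal X N e estar ->
  exists kap, 0 <= kap /\ forall y, exists z, (forall p, vnorm (Sp N e estar p z) <= kap * vnorm y) /\
     vnorm (vsub y z) <= vnorm y / 2.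
Proof.
  intros Hb Ho.
  destruct (baire X HX (fun M z => forall p, vnorm (Sp N e estar p z) <= M)) as [M [x0 [r [Hr Hd]]]].
  - intros M M' z HM Hz p. specialize (Hz p). lra.
  - apply Sp_bounded; auto.
  - exists (4 * Rabs M / r). split.
    { apply Rmult_le_pos; [pose proof (Rabs_pos M); lra | left; apply Rinv_0_lt_compat; auto]. }
    intros y. destruct (Req_dec (vnorm y) 0) as [Hy0|Hy0].
    + exists vzero. split.
      * intros p. rewrite Sp_zero, vnorm_z, Hy0 by auto. lra.
      * rewrite vsub_0r, Hy0. lra.
    + pose proof (vnorm_nonneg y) as Hyn.
      assert (Hyp : 0 < vnorm y) by lra.
      set (t := r / (2 * vnorm y)).
      assert (Ht : 0 < t) by (unfold t; apply Rdiv_lt_0_compat; lra).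
      set (y' := vscal t y).
      set (ep := vnorm y * t / 4).
      assert (Hep : 0 < ep) by (unfold ep; apply Rdiv_lt_0_compat; [apply Rmult_lt_0_compat|]; lra).
      assert (Hy'n : vnorm y' = r / 2).
      { unfold y'. rewrite vnorm_scal, Rabs_right by lra. unfold t. field. lra. }
      destruct (Hd (vadd x0 y') ltac:(rewrite vsub_add_l; lra) ep Hep) as [z1 [Hz1 Hz1']].
      destruct (Hd x0 ltac:(rewrite vsub_diag, vnorm_z; lra) ep Hep) as [z2 [Hz2 Hz2']].
      set (z' := vsub z1 z2).
      exists (vscal (/ t) z'). split.
      * intros p. rewrite Sp_scal, vnorm_scal by auto. unfold z'. rewrite Sp_sub by auto.
        pose proof (vnorm_sub_le (Sp N e estar p z1) (Sp N e estar p z2)).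
        specialize (Hz1 p). specialize (Hz2 p).
        rewrite Rabs_right by (left; apply Rinv_0_lt_compat; lra).
        assert (Hb2 : vnorm (vsub (Sp N e estar p z1) (Sp N e estar p z2)) <= 2 * Rabs M).
        { pose proof (Rle_abs M). lra. }
        apply Rle_trans with (/ t * (2 * Rabs M)).
        { apply Rmult_le_compat_l; [left; apply Rinv_0_lt_compat|]; lra. }
        unfold t. right. field. lra.
      * assert (y = vscal (/ t) y') as Hyy.
        { unfold y'. rewrite vscal_assoc, Rinv_l, vscal_1 by lra. reflexivity. }
        rewrite Hyy at 1. rewrite <- vscal_sub, vnorm_scal.
        rewrite Rabs_right by (left; apply Rinv_0_lt_compat; lra).
        assert (vnorm (vsub y' z') < 2 * ep).
        { rewrite vnorm_sub_sym. unfold z'. rewrite (vsub_ident1 z1 z2 x0 y').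
          eapply Rle_lt_trans. apply vnorm_sub_le. lra. }
        apply Rle_trans with (/ t * (2 * ep)).
        { apply Rmult_le_compat_l; [left; apply Rinv_0_lt_compat|]; lra. }
        unfold ep. right. field. lra.
Qed.

Lemma vsub_ident2 {X : NormedSpace} (y a b : X) : vsub (vsub y b) (vsub y a) = vsub a b.
Proof.
  unfold vsub. rewrite vopp_add, vopp_opp, vadd4, vadd_opp, vadd_0l, vadd_comm. reflexivity.
Qed.

Lemma vsub_ident3 {X : NormedSpace} (a b g : X) : vsub a (vsub b g) = vadd (vsub a b) g.
Proof. unfold vsub. rewrite vopp_add, vopp_opp, vadd_assoc. reflexivity. Qed.

Lemma vsub_ident4 {X : NormedSpace} (y r : X) : vsub (vsub y r) y = vopp r.
Proof.
  unfold vsub. rewrite (vadd_comm y (vopp r)), <- vadd_assoc, vadd_opp, vadd_0. reflexivity.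
Qed.

Lemma Sp_add (X : NormedSpace) N (e : nat -> X) estar :
  is_basis X N e -> biorthogonal X N e estar ->
  forall p x y, Sp N e estar p (vadd x y) = vadd (Sp N e estar p x) (Sp N e estar p y).
Proof.
  intros Hb Ho p x y. rewrite <- (vscal_1 x), <- (vscal_1 y), Sp_lin, !vscal_1 by auto. reflexivity.
Qed.

Lemma half_pow_mono (L l : nat) : (L <= l)%nat -> (1/2)^l <= (1/2)^L.
Proof.
  intros H. induction H. lra. simpl. assert (0 <= (1/2)^m) by (apply pow_le; lra). lra.
Qed.

Lemma Sp_unif (X : NormedSpace) (HX : complete X) N (e : nat -> X) estar :
  is_basis X N e -> biorthogonal X N e estar ->
  exists C, 0 <= C /\ forall y p, vnorm (Sp N e estar p y) <= C * vnorm y.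
Proof.
  intros Hb Ho. destruct (Sp_dense X HX N e estar Hb Ho) as [kap [Hk Hd]].
  destruct (choice_fun vzero (fun y z => (forall p, vnorm (Sp N e estar p z) <= kap * vnorm y) /\
     vnorm (vsub y z) <= vnorm y / 2) Hd) as [g Hg].
  exists (2 * kap). split; [lra|]. intros y p.
  set (Rs := iter_seq y (fun _ R => vsub R (g R))).
  assert (HR : forall i, vnorm (Rs i) <= vnorm y * (1/2)^i).
  { intros i; induction i. unfold Rs; simpl; lra.
    change (Rs (S i)) with (vsub (Rs i) (g (Rs i))). destruct (Hg (Rs i)) as [_ H].
    replace (vnorm y * (1/2)^(S i)) with ((vnorm y * (1/2)^i) / 2) by (simpl; field). lra. }
  set (Y := fun l => vsub y (Rs l)).
  set (dl := fun l => 2 * kap * vnorm y * (1/2)^l).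
  assert (HUa : forall l l' p, (l <= l')%nat ->
     vnorm (Sp N e estar p (vsub (Rs l) (Rs l'))) <= 2 * kap * vnorm y * ((1/2)^l - (1/2)^l')).
  { intros l l' q Hll'. induction Hll'.
    - rewrite vsub_diag, Sp_zero, vnorm_z by auto. lra.
    - change (Rs (S m)) with (vsub (Rs m) (g (Rs m))).
      rewrite vsub_ident3, Sp_add by auto. eapply Rle_trans. apply vnorm_triangle.
      destruct (Hg (Rs m)) as [H1 _]. specialize (H1 q). specialize (HR m).
      assert (kap * vnorm (Rs m) <= kap * (vnorm y * (1/2)^m)) by (apply Rmult_le_compat_l; auto).
      simpl. lra. }
  assert (HU : forall l l' p, (l <= l')%nat ->
     vnorm (vsub (Sp N e estar p (Y l')) (Sp N e estar p (Y l))) <= dl l).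
  { intros l l' q Hll'. unfold Y. rewrite <- Sp_sub, vsub_ident2 by auto.
    eapply Rle_trans. apply HUa; auto. unfold dl.
    assert (0 <= (1/2)^l') by (apply pow_le; lra). pose proof (vnorm_nonneg y).
    assert (0 <= 2 * kap * vnorm y) by (apply Rmult_le_pos; lra).
    nra. }
  assert (Hdl : forall eps, 0 < eps -> exists L0, forall l, (L0 <= l)%nat -> dl l < eps).
  { intros eps He. destruct (half_pow_small (eps / (2 * kap * vnorm y + 1))) as [L HL].
    { apply Rdiv_lt_0_compat; auto. pose proof (vnorm_nonneg y). assert (0 <= kap * vnorm y) by (apply Rmult_le_pos; lra). lra. }
    exists L. intros l Hl. unfold dl.
    assert ((1/2)^l <= (1/2)^L) by (apply half_pow_mono; lia).
    pose proof (vnorm_nonneg y). assert (0 <= 2 * kap * vnorm y) by (apply Rmult_le_pos; lra || (apply Rmult_le_pos; lra)).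
    assert (0 <= (1/2)^l) by (apply pow_le; lra).
    apply Rle_lt_trans with ((2 * kap * vnorm y + 1) * (1/2)^L).
    { nra. }
    apply (Rmult_lt_reg_r (/ (2 * kap * vnorm y + 1))). apply Rinv_0_lt_compat; lra.
    rewrite Rmult_comm, <- Rmult_assoc, Rinv_l, Rmult_1_l by lra. unfold Rdiv in HL. lra. }
  assert (HY : forall eps, 0 < eps -> exists L, forall l, (L <= l)%nat -> vnorm (vsub (Y l) y) < eps).
  { intros eps He. destruct (half_pow_small (eps / (vnorm y + 1))) as [L HL].
    { apply Rdiv_lt_0_compat; auto. pose proof (vnorm_nonneg y). lra. }
    exists L. intros l Hl. unfold Y. rewrite vsub_ident4, vnorm_opp.
    assert ((1/2)^l <= (1/2)^L) by (apply half_pow_mono; lia).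
    pose proof (vnorm_nonneg y). specialize (HR l).
    assert (0 <= (1/2)^l) by (apply pow_le; lra).
    apply Rle_lt_trans with ((vnorm y + 1) * (1/2)^L). nra.
    apply (Rmult_lt_reg_r (/ (vnorm y + 1))). apply Rinv_0_lt_compat; lra.
    rewrite Rmult_comm, <- Rmult_assoc, Rinv_l, Rmult_1_l by lra. unfold Rdiv in HL. lra. }
  pose proof (uc_limit X HX N e estar Hb Ho Y dl y Hdl HU HY 0%nat p).
  unfold Y in H. simpl in H. rewrite vsub_diag, Sp_zero, vsub_0r in H by auto.
  unfold dl in H. simpl in H. lra.
Qed.

Lemma estar_bounded (X : NormedSpace) (HX : complete X) N (e : nat -> X) estar :
  is_basis X N e -> biorthogonal X N e estar ->
  forall k, in_len N k -> exists C, forall x, Rabs (estar k x) <= C * vnorm x.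
Proof.
  intros Hb Ho k Hk. destruct (Sp_unif X HX N e estar Hb Ho) as [C [HC HS]].
  assert (Hek : 0 < vnorm (e k)).
  { pose proof (vnorm_nonneg (e k)). destruct H; auto. exfalso.
    apply (e_nonzero X N e estar Hb Ho k Hk). apply vnorm_eq0; auto. }
  exists (2 * C / vnorm (e k)). intros x.
  destruct k as [|k]; [destruct Hk; lia|].
  assert (vscal (cf N estar x (S k)) (e (S k)) = vsub (Sp N e estar (S k) x) (Sp N e estar k x)) as Hv.
  { rewrite Sp_S, vsub_add_l. reflexivity. }
  assert (Hc : cf N estar x (S k) = estar (S k) x).
  { unfold cf. rewrite (proj2 (inb_spec N (S k)) Hk). auto. }
  pose proof (vnorm_sub_le (Sp N e estar (S k) x) (Sp N e estar k x)).
  rewrite <- Hv, vnorm_scal, Hc in H. pose proof (HS x (S k)). pose proof (HS x k).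
  apply (Rmult_le_reg_r (vnorm (e (S k)))); auto.
  replace (2 * C / vnorm (e (S k)) * vnorm x * vnorm (e (S k))) with (2 * C * vnorm x) by (field; lra).
  lra.
Qed.

Definition dotL (L : nat) (c a : nat -> R) : R := gsum 0 Rplus (seq 1 L) (fun k => c k * a k).
Definition padd (a b : nat -> R) : nat -> R := fun k => a k + b k.
Definition pscal (s : R) (a : nat -> R) : nat -> R := fun k => s * a k.
Definition sublin (p : (nat -> R) -> R) : Prop :=
  (forall a b, p (padd a b) <= p a + p b) /\ (forall t a, 0 <= t -> p (pscal t a) = t * p a).
Definition depL (L : nat) (p : (nat -> R) -> R) : Prop :=
  forall a b, (forall k, (1 <= k <= L)%nat -> a k = b k) -> p a = p b.
Definition trunc (L : nat) (a : nat -> R) : nat -> R :=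
  fun k => if (Nat.leb 1 k && Nat.leb k L)%bool then a k else 0.

Lemma sublin_zero p : sublin p -> p (fun _ => 0) = 0.
Proof.
  intros [_ H]. pose proof (H 0 (fun _ => 0) (Rle_refl 0)). unfold pscal in H0.
  replace (fun _ : nat => 0 * 0) with (fun _ : nat => 0) in H0 by (apply functional_extensionality; intros; ring).
  lra.
Qed.

Lemma HB_step_slope (h : R -> R) (sg s1 s2 : R) :
  s1 < sg -> sg < s2 ->
  h sg * (s2 - s1) <= (s2 - sg) * h s1 + (sg - s1) * h s2 ->
  (h sg - h s1) / (sg - s1) <= (h s2 - h sg) / (s2 - sg).
Proof.
  intros H1 H2 H3.
  apply (Rmult_le_reg_r ((sg - s1) * (s2 - sg))). apply Rmult_lt_0_compat; lra.
  replace ((h sg - h s1) / (sg - s1) * ((sg - s1) * (s2 - sg))) with ((h sg - h s1) * (s2 - sg)) by (field; lra).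
  replace ((h s2 - h sg) / (s2 - sg) * ((sg - s1) * (s2 - sg))) with ((h s2 - h sg) * (sg - s1)) by (field; lra).
  nra.
Qed.

Lemma dotL_S L c a : dotL (S L) c a = dotL L c a + c (S L) * a (S L).
Proof. unfold dotL. rewrite seq_S, rgsum_app. simpl. ring. Qed.

Lemma dotL_ext L c c' a : (forall k, (1 <= k <= L)%nat -> c k = c' k) -> dotL L c a = dotL L c' a.
Proof. intros H. unfold dotL. apply gsum_ext. intros i Hi. apply in_seq in Hi. rewrite H by lia. auto. Qed.

Theorem HB_fin : forall L p, sublin p -> depL L p -> forall a0,
  exists c, (forall a, dotL L c a <= p a) /\ dotL L c a0 = p a0.
Proof.
  induction L as [|L IH]; intros p Hp Hd a0.
  - assert (Hz : forall a, p a = 0).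
    { intros a. rewrite (Hd a (fun _ => 0)) by lia. apply sublin_zero; auto. }
    exists (fun _ => 0). unfold dotL. simpl. split; [intros a; rewrite Hz; lra | rewrite Hz; auto].
  - destruct Hp as [Hsub Hhom].
    set (t := delta (S L)).
    set (tr := trunc L).
    set (sg := a0 (S L)).
    set (h := fun s => p (padd (tr a0) (pscal s t))).
    assert (Hconv : forall s1 s2 lam, 0 <= lam <= 1 ->
      h (lam * s1 + (1 - lam) * s2) <= lam * h s1 + (1 - lam) * h s2).
    { intros s1 s2 lam Hl. unfold h.
      replace (padd (tr a0) (pscal (lam * s1 + (1 - lam) * s2) t)) with
        (padd (pscal lam (padd (tr a0) (pscal s1 t))) (pscal (1 - lam) (padd (tr a0) (pscal s2 t)))).
      2:{ apply functional_extensionality; intros k. unfold padd, pscal. ring. }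
      eapply Rle_trans. apply Hsub. rewrite !Hhom by lra. lra. }
    assert (Hslope : forall s1 s2, s1 < sg -> sg < s2 -> (h sg - h s1) / (sg - s1) <= (h s2 - h sg) / (s2 - sg)).
    { intros s1 s2 H1 H2. apply HB_step_slope; auto.
      set (lam := (s2 - sg) / (s2 - s1)).
      assert (Hl : 0 <= lam <= 1).
      { unfold lam. split. apply Rmult_le_pos; [lra | left; apply Rinv_0_lt_compat; lra].
        apply (Rmult_le_reg_r (s2 - s1)); [lra|]. field_simplify; lra. }
      pose proof (Hconv s1 s2 lam Hl).
      replace (lam * s1 + (1 - lam) * s2) with sg in H by (unfold lam; field; lra).
      apply (Rmult_le_compat_r (s2 - s1)) in H; [|lra].
      replace ((lam * h s1 + (1 - lam) * h s2) * (s2 - s1)) with ((s2 - sg) * h s1 + (sg - s1) * h s2) in H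
        by (unfold lam; field; lra). lra. }
    set (E := fun r => exists s, s < sg /\ r = (h sg - h s) / (sg - s)).
    assert (HEne : exists x, E x) by (exists ((h sg - h (sg - 1)) / (sg - (sg - 1))); exists (sg - 1); split; [lra|auto]).
    assert (HEb : forall r, E r -> r <= (h (sg + 1) - h sg) / (sg + 1 - sg)).
    { intros r [s [Hs ->]]. apply Hslope; lra. }
    set (gam := Rsup E).
    assert (HL1 : forall s, s < sg -> (h sg - h s) / (sg - s) <= gam).
    { intros s Hs. eapply Rsup_ub; [exact HEb|]. exists s; auto. }
    assert (HL2 : forall s, sg < s -> gam <= (h s - h sg) / (s - sg)).
    { intros s Hs. apply Rsup_le; auto. intros r [s1 [Hs1 ->]]. apply Hslope; lra. }
    assert (Hsubg : forall s, h sg + (s - sg) * gam <= h s).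
    { intros s. destruct (Rtotal_order s sg) as [Hs|[Hs|Hs]].
      - pose proof (HL1 s Hs). apply (Rmult_le_compat_r (sg - s)) in H; [|lra].
        replace ((h sg - h s) / (sg - s) * (sg - s)) with (h sg - h s) in H by (field; lra). nra.
      - subst. lra.
      - pose proof (HL2 s Hs). apply (Rmult_le_compat_r (s - sg)) in H; [|lra].
        replace ((h s - h sg) / (s - sg) * (s - sg)) with (h s - h sg) in H by (field; lra). nra. }
    assert (Hgam1 : gam <= p t).
    { pose proof (HL2 (sg + 1) ltac:(lra)). replace (sg + 1 - sg) with 1 in H by ring.
      assert (h (sg + 1) <= h sg + p t).
      { unfold h. replace (padd (tr a0) (pscal (sg + 1) t)) with (padd (padd (tr a0) (pscal sg t)) t).
        apply Hsub. apply functional_extensionality; intros k. unfold padd, pscal. ring. }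
      unfold Rdiv in H. rewrite Rinv_1, Rmult_1_r in H. lra. }
    assert (Hgam2 : - p (pscal (-1) t) <= gam).
    { pose proof (HL1 (sg - 1) ltac:(lra)). replace (sg - (sg - 1)) with 1 in H by ring.
      assert (h (sg - 1) <= h sg + p (pscal (-1) t)).
      { unfold h. replace (padd (tr a0) (pscal (sg - 1) t)) with (padd (padd (tr a0) (pscal sg t)) (pscal (-1) t)).
        apply Hsub. apply functional_extensionality; intros k. unfold padd, pscal. ring. }
      unfold Rdiv in H. rewrite Rinv_1, Rmult_1_r in H. lra. }
    assert (Hpst : forall s, s * gam <= p (pscal s t)).
    { intros s. destruct (Rle_dec 0 s).
      - rewrite Hhom by auto. apply Rmult_le_compat_l; auto.
      - replace (pscal s t) with (pscal (-s) (pscal (-1) t)).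
        rewrite Hhom by lra. nra.
        apply functional_extensionality; intros k. unfold pscal. ring. }
    set (Fa := fun a r => exists s, r = - (p (padd (tr a) (pscal s t)) - s * gam)).
    set (p' := fun a => - Rsup (Fa a)).
    assert (Hlow : forall a s, - p (pscal (-1) (tr a)) <= p (padd (tr a) (pscal s t)) - s * gam).
    { intros a s. pose proof (Hpst s).
      assert (p (pscal s t) <= p (padd (tr a) (pscal s t)) + p (pscal (-1) (tr a))).
      { replace (pscal s t) with (padd (padd (tr a) (pscal s t)) (pscal (-1) (tr a))) at 1.
        apply Hsub. apply functional_extensionality; intros k. unfold padd, pscal. ring. }
      lra. }
    assert (HFne : forall a, exists x, Fa a x) by (intros a; exists (- (p (padd (tr a) (pscal 0 t)) - 0 * gam)); exists 0; auto).
    assert (HFb : forall a r, Fa a r -> r <= p (pscal (-1) (tr a))).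
    { intros a r [s ->]. pose proof (Hlow a s). lra. }
    assert (Hp'le : forall a s, p' a <= p (padd (tr a) (pscal s t)) - s * gam).
    { intros a s. unfold p'. assert (- (p (padd (tr a) (pscal s t)) - s * gam) <= Rsup (Fa a)).
      { eapply Rsup_ub. apply HFb. exists s; auto. } lra. }
    assert (Hp'ap : forall a eps, 0 < eps -> exists s, p (padd (tr a) (pscal s t)) - s * gam < p' a + eps).
    { intros a eps He. destruct (Rsup_approx (Fa a) _ eps (HFne a) (HFb a) He) as [x [[s ->] Hx]].
      exists s. unfold p'. lra. }
    assert (Hp'ge : forall a m, (forall s, m <= p (padd (tr a) (pscal s t)) - s * gam) -> m <= p' a).
    { intros a m Hm. unfold p'. assert (Rsup (Fa a) <= - m).
      { apply Rsup_le; auto. intros r [s ->]. specialize (Hm s). lra. } lra. }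
    assert (Hsub' : sublin p').
    { split.
      - intros a b. apply Rle_plus_epsilon. intros eps He.
        destruct (Hp'ap a (eps/2) ltac:(lra)) as [s1 H1]. destruct (Hp'ap b (eps/2) ltac:(lra)) as [s2 H2].
        pose proof (Hp'le (padd a b) (s1 + s2)).
        assert (padd (tr (padd a b)) (pscal (s1 + s2) t) = padd (padd (tr a) (pscal s1 t)) (padd (tr b) (pscal s2 t))).
        { apply functional_extensionality; intros k. unfold padd, pscal, tr, trunc.
          destruct (Nat.leb 1 k && Nat.leb k L)%bool; ring. }
        rewrite H0 in H. pose proof (Hsub (padd (tr a) (pscal s1 t)) (padd (tr b) (pscal s2 t))). lra.
      - intros s0 a Hs0. destruct Hs0 as [Hs0|Hs0].
        + apply Rle_antisym.
          * apply Rle_plus_epsilon. intros eps He.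
            destruct (Hp'ap a (eps / s0) ltac:(apply Rdiv_lt_0_compat; lra)) as [s Hs].
            pose proof (Hp'le (pscal s0 a) (s0 * s)).
            assert (padd (tr (pscal s0 a)) (pscal (s0 * s) t) = pscal s0 (padd (tr a) (pscal s t))).
            { apply functional_extensionality; intros k. unfold padd, pscal, tr, trunc.
              destruct (Nat.leb 1 k && Nat.leb k L)%bool; ring. }
            rewrite H0, Hhom in H by lra.
            apply (Rmult_lt_compat_l s0) in Hs; auto.
            replace (s0 * (p' a + eps / s0)) with (s0 * p' a + eps) in Hs by (field; lra). nra.
          * apply Rle_plus_epsilon. intros eps He.
            destruct (Hp'ap (pscal s0 a) eps He) as [s Hs].
            pose proof (Hp'le a (s / s0)).
            assert (padd (tr (pscal s0 a)) (pscal s t) = pscal s0 (padd (tr a) (pscal (s / s0) t))).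
            { apply functional_extensionality; intros k. unfold padd, pscal, tr, trunc.
              destruct (Nat.leb 1 k && Nat.leb k L)%bool; field; lra. }
            rewrite H0, Hhom in Hs by lra.
            apply (Rmult_le_compat_l s0) in H; [|lra].
            replace (s0 * (p (padd (tr a) (pscal (s / s0) t)) - s / s0 * gam)) with
              (s0 * p (padd (tr a) (pscal (s / s0) t)) - s * gam) in H by (field; lra).
            lra.
        + subst s0. rewrite Rmult_0_l. apply Rle_antisym.
          * pose proof (Hp'le (pscal 0 a) 0).
            assert (padd (tr (pscal 0 a)) (pscal 0 t) = pscal 0 a).
            { apply functional_extensionality; intros k. unfold padd, pscal, tr, trunc.
              destruct (Nat.leb 1 k && Nat.leb k L)%bool; ring. }
            rewrite H0, Hhom in H by lra. lra.
          * apply Hp'ge. intros s. pose proof (Hpst s).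
            assert (padd (tr (pscal 0 a)) (pscal s t) = pscal s t).
            { apply functional_extensionality; intros k. unfold padd, pscal, tr, trunc.
              destruct (Nat.leb 1 k && Nat.leb k L)%bool; ring. }
            rewrite H0. lra. }
    assert (Hdep' : depL L p').
    { intros a b Hab. unfold p'. f_equal. apply Rsup_ext. intros r. unfold Fa.
      assert (tr a = tr b) as ->; [|tauto].
      apply functional_extensionality; intros k. unfold tr, trunc.
      destruct (Nat.leb_spec 1 k); destruct (Nat.leb_spec k L); simpl; auto; apply Hab; lia. }
    destruct (IH p' Hsub' Hdep' a0) as [c' [Hc1 Hc2]].
    exists (fun k => if Nat.eqb k (S L) then gam else c' k).
    assert (Hdot : forall a, dotL (S L) (fun k => if Nat.eqb k (S L) then gam else c' k) a = dotL L c' a + gam * a (S L)).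
    { intros a. rewrite dotL_S, Nat.eqb_refl. f_equal. apply dotL_ext. intros k Hk.
      destruct (Nat.eqb_spec k (S L)); auto; lia. }
    assert (Hrec : forall a, p a = p (padd (tr a) (pscal (a (S L)) t))).
    { intros a. apply Hd. intros k Hk. unfold padd, pscal, tr, trunc, t, delta.
      destruct (Nat.eqb_spec k (S L)).
      - subst. destruct (Nat.leb_spec (S L) L); [lia|]. rewrite Bool.andb_false_r. ring.
      - destruct (Nat.leb_spec 1 k); [|lia]. destruct (Nat.leb_spec k L); [|lia]. simpl. ring. }
    split.
    + intros a. rewrite Hdot. pose proof (Hc1 a). pose proof (Hp'le a (a (S L))). rewrite (Hrec a). lra.
    + rewrite Hdot, Hc2. rewrite (Hrec a0). fold sg.
      assert (p' a0 = h sg - sg * gam).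
      { apply Rle_antisym. apply Hp'le. apply Hp'ge. intros s. pose proof (Hsubg s). unfold h in *. lra. }
      rewrite H. unfold h. ring.
Qed.

Lemma rgsum_single a len j (F : nat -> R) : (forall i, i <> j -> F i = 0) ->
  gsum 0 Rplus (seq a len) F = if (Nat.leb a j && Nat.ltb j (a + len))%bool then F j else 0.
Proof.
  intros H. revert a. induction len; intros a; simpl.
  - destruct (Nat.leb_spec a j); destruct (Nat.ltb_spec j (a + 0)); simpl; auto; lia.
  - rewrite IHlen. destruct (Nat.eqb_spec a j).
    + subst. rewrite Nat.leb_refl.
      destruct (Nat.leb_spec (S j) j); [lia|]. simpl. destruct (Nat.ltb_spec j (j + S len)); [|lia]. ring.
    + rewrite H by auto. rewrite Rplus_0_l. replace (S a + len)%nat with (a + S len)%nat by lia.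
      destruct (Nat.leb_spec (S a) j); destruct (Nat.leb_spec a j); try lia; simpl; auto.
Qed.

Lemma vgsum_telescope {X : NormedSpace} (A : nat -> X) r :
  gsum vzero vadd (seq 1 r) (fun j => vsub (A j) (A (j - 1)%nat)) = vsub (A r) (A 0%nat).
Proof.
  induction r.
  - simpl. rewrite vsub_diag. auto.
  - rewrite seq_S, vgsum_app, IHr. simpl. rewrite vadd_0. replace (r - 0)%nat with r by lia.
    rewrite vadd_comm. unfold vsub. rewrite <- vadd_assoc. f_equal.
    rewrite vadd_assoc, (vadd_comm (vopp (A r))), vadd_opp, vadd_0l. reflexivity.
Qed.

Lemma block_comb {X : NormedSpace} (e : nat -> X) c a b : c b = 0 -> (a < b)%nat ->
  gsum vzero vadd (seq (a + 1) (b - a - 1)) (fun i => vscal (c i) (e i)) = vsub (comb e c b) (comb e c a).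
Proof.
  intros Hcb Hab. unfold comb.
  replace b with (a + (b - a - 1) + 1)%nat at 2 by lia.
  rewrite !seq_app, !vgsum_app. replace (1 + (a + (b - a - 1)))%nat with b by lia.
  simpl. rewrite Hcb, vscal_0, !vadd_0. replace (a + 1)%nat with (S a) by lia.
  rewrite vsub_add_l. reflexivity.
Qed.

Lemma Fs_gsum_eval (X : NormedSpace) l (F : nat -> (X -> R) -> R) g :
  gsum (Fs_zero X) (Fs_add X) l F g = gsum 0 Rplus l (fun i => F i g).
Proof. induction l; simpl; auto. unfold Fs_add at 1. rewrite IHl. auto. Qed.

Lemma m_mono (m : nat -> nat) n : (forall j, (1 <= j < n)%nat -> (m j < m (S j))%nat) ->
  forall a b, (1 <= a)%nat -> (a <= b)%nat -> (b <= n)%nat -> (m a + (b - a) <= m b)%nat.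
Proof.
  intros H a b Ha Hab Hbn. induction Hab. lia.
  specialize (IHHab ltac:(lia)). specialize (H m0 ltac:(lia)). lia.
Qed.

Lemma rgsum_delta_in l (d : nat -> R) i0 : NoDup l -> In i0 l ->
  gsum 0 Rplus l (fun i => d i * (if Nat.eqb i0 i then 1 else 0)) = d i0.
Proof.
  induction l; simpl; intros Hn Hi; [tauto|]. inversion Hn; subst.
  destruct Hi as [->|Hi].
  - rewrite Nat.eqb_refl. rewrite rgsum_zero. ring. intros i Hi. destruct (Nat.eqb_spec i0 i); subst; [tauto|ring].
  - destruct (Nat.eqb_spec i0 a); subst; [tauto|]. rewrite IHl; auto. ring.
Qed.

Definition blockv {X : NormedSpace} (e : nat -> X) (c : nat -> R) (a b : nat) : X :=
  gsum vzero vadd (seq (a + 1) (b - a - 1)) (fun i => vscal (c i) (e i)).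

Definition HypX (X : NormedSpace) (N : option nat) (e : nat -> X) (m1 : nat) (lam : R) : Prop :=
  forall r (G : nat -> nat) (c : nat -> R) (eps : nat -> R),
    G 0%nat = 0%nat -> (forall j, (1 <= j <= r)%nat -> (G (j - 1) + 2 <= G j)%nat) ->
    ((1 <= r)%nat -> (m1 < G 1%nat)%nat) -> zero_out N c ->
    (forall j, (1 <= j <= r)%nat -> eps j = 1 \/ eps j = -1) ->
    vnorm (gsum vzero vadd (seq 1 r) (fun j => vscal (eps j) (blockv e c (G (j - 1)%nat) (G j)))) <=
    lam * vnorm (gsum vzero vadd (seq 1 r) (fun j => blockv e c (G (j - 1)%nat) (G j))).

Lemma fseq_1 X estar m n xs ys : functional_seq X estar m n xs ys 1 = xs.
Proof. reflexivity. Qed.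

Lemma fseq_mid X estar m n xs ys k : (2 <= k)%nat -> (k < Nat.max 2 n)%nat ->
  functional_seq X estar m n xs ys k = estar (m k).
Proof.
  intros H1 H2. unfold functional_seq. destruct (Nat.eqb_spec k 1); [lia|].
  destruct (Nat.ltb_spec k (Nat.max 2 n)); [auto|lia].
Qed.

Lemma fseq_L X estar m n xs ys : functional_seq X estar m n xs ys (Nat.max 2 n) = ys.
Proof.
  unfold functional_seq. destruct (Nat.eqb_spec (Nat.max 2 n) 1); [lia|].
  destruct (Nat.ltb_spec (Nat.max 2 n) (Nat.max 2 n)); [lia|auto].
Qed.

Lemma m_inlen N m n : (1 <= m 1%nat)%nat -> (forall j, (1 <= j < n)%nat -> (m j < m (S j))%nat) ->
  lt_len (m n) N -> forall k, (1 <= k <= n)%nat -> in_len N (m k).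
Proof.
  intros Hm1 Hmono HmN k Hk. pose proof (m_mono m n Hmono 1 k ltac:(lia) ltac:(lia) ltac:(lia)).
  pose proof (m_mono m n Hmono k n ltac:(lia) ltac:(lia) ltac:(lia)).
  unfold in_len, lt_len in *. destruct N; split; try lia; auto.
Qed.

Lemma f_dual (X : NormedSpace) (HX : complete X) N (e : nat -> X) estar m n xs ys :
  is_basis X N e -> biorthogonal X N e estar ->
  (1 <= m 1%nat)%nat -> (forall j, (1 <= j < n)%nat -> (m j < m (S j))%nat) -> lt_len (m n) N ->
  in_dual X xs -> in_dual X ys ->
  forall k, (1 <= k <= Nat.max 2 n)%nat -> in_dual X (functional_seq X estar m n xs ys k).
Proof.
  intros Hb Ho Hm1 Hmono HmN Hxs Hys k Hk.
  destruct (Nat.eqb_spec k 1). subst; auto.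
  destruct (Nat.eqb_spec k (Nat.max 2 n)). subst; rewrite fseq_L; auto.
  rewrite fseq_mid by lia.
  assert (Hin : in_len N (m k)) by (apply (m_inlen N m n Hm1 Hmono HmN); lia).
  split. apply (estar_lin X N e estar Hb Ho _ Hin). apply (estar_bounded X HX N e estar Hb Ho _ Hin).
Qed.

Lemma v_exists (X : NormedSpace) N (e : nat -> X) estar m n xs ys :
  is_basis X N e -> biorthogonal X N e estar -> (1 <= n)%nat ->
  (1 <= m 1%nat)%nat -> (forall j, (1 <= j < n)%nat -> (m j < m (S j))%nat) -> lt_len (m n) N ->
  in_dual X xs -> (exists v, xs v <> 0) -> in_dual X ys -> (exists v, ys v <> 0) ->
  (exists c : nat -> R, forall v, xs v = gsum 0 Rplus (seq 1 (m 1%nat)) (fun k => c k * estar k v)) ->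
  (forall j, (1 <= j <= m n)%nat -> ys (e j) = 0) ->
  exists vv : nat -> X, forall k l, (1 <= k <= Nat.max 2 n)%nat -> (1 <= l <= Nat.max 2 n)%nat ->
    functional_seq X estar m n xs ys k (vv l) = if Nat.eqb k l then 1 else 0.
Proof.
  intros Hb Ho Hn Hm1 Hmono HmN [Hxl _] [v1 Hv1] [Hyl _] [v2 Hv2] [d Hd] HysF.
  set (L := Nat.max 2 n).
  assert (Hmm : forall a b, (1 <= a)%nat -> (a <= b)%nat -> (b <= n)%nat -> (m a + (b - a) <= m b)%nat)
    by (apply m_mono; auto).
  assert (Hin : forall k, (1 <= k <= n)%nat -> in_len N (m k)) by (apply m_inlen; auto).
  assert (Hinj : forall i, (1 <= i <= m n)%nat -> in_len N i).
  { intros i Hi. pose proof (Hin n ltac:(lia)). unfold in_len in *. destruct N; lia. }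
  assert (Hm1n : (m 1%nat <= m n)%nat) by (pose proof (Hmm 1%nat n ltac:(lia) ltac:(lia) ltac:(lia)); lia).
  assert (Hi0 : exists i0, (1 <= i0 <= m 1%nat)%nat /\ d i0 <> 0).
  { apply NNPP. intros Hc. apply Hv1. rewrite Hd. apply rgsum_zero. intros i Hi.
    apply in_seq in Hi. destruct (Req_dec (d i) 0) as [->|Hne]; [ring|].
    exfalso; apply Hc. exists i; split; auto; lia. }
  destruct Hi0 as [i0 [Hi0 Hdi0]].
  set (x0 := vscal (/ d i0) (e i0)).
  assert (Hx0 : forall j, in_len N j -> estar j x0 = / d i0 * (if Nat.eqb j i0 then 1 else 0)).
  { intros j Hj. unfold x0. rewrite (lin_scal _ (estar_lin X N e estar Hb Ho j Hj)).
    rewrite (estar_e X N e estar Ho) by (auto; apply Hinj; lia). auto. }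
  set (z1 := vsub v2 (Sp N e estar (m n) v2)).
  assert (Hys1 : ys (Sp N e estar (m n) v2) = 0).
  { unfold Sp, comb. rewrite (lin_gsum _ Hyl). apply rgsum_zero. intros i Hi. apply in_seq in Hi.
    rewrite (lin_scal _ Hyl), HysF by lia. ring. }
  assert (Hz1 : ys z1 = ys v2) by (unfold z1; rewrite (lin_sub _ Hyl), Hys1; ring).
  assert (Hz1e : forall j, (1 <= j <= m n)%nat -> estar j z1 = 0).
  { intros j Hj. unfold z1. rewrite (lin_sub _ (estar_lin X N e estar Hb Ho j (Hinj j Hj))).
    unfold Sp. rewrite (estar_comb X N e estar Ho) by (auto; apply cf_zero_out).
    destruct (Nat.leb_spec j (m n)); [|lia]. unfold cf. rewrite (proj2 (inb_spec _ _) (Hinj j Hj)). ring. }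
  set (z0 := vscal (/ ys v2) z1).
  assert (Hz0y : ys z0 = 1) by (unfold z0; rewrite (lin_scal _ Hyl), Hz1; field; auto).
  assert (Hz0e : forall j, (1 <= j <= m n)%nat -> estar j z0 = 0).
  { intros j Hj. unfold z0. rewrite (lin_scal _ (estar_lin X N e estar Hb Ho j (Hinj j Hj))), Hz1e by auto. ring. }
  exists (fun l => if Nat.eqb l 1 then x0 else if Nat.ltb l L then e (m l) else z0).
  intros k l Hk Hl.
  assert (Hxs_e : forall u, xs u = gsum 0 Rplus (seq 1 (m 1%nat)) (fun k => d k * estar k u)) by apply Hd.
  assert (Hvl : (l = 1%nat /\ (if Nat.eqb l 1 then x0 else if Nat.ltb l L then e (m l) else z0) = x0) \/
                ((2 <= l < L)%nat /\ (if Nat.eqb l 1 then x0 else if Nat.ltb l L then e (m l) else z0) = e (m l)) \/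
                (l = L /\ (if Nat.eqb l 1 then x0 else if Nat.ltb l L then e (m l) else z0) = z0)).
  { destruct (Nat.eqb_spec l 1). left; auto. destruct (Nat.ltb_spec l L). right; left; split; auto; lia.
    right; right; split; auto. unfold L in *; lia. }
  destruct Hvl as [[-> ->]|[[Hl2 ->]|[-> ->]]].
  -
    destruct (Nat.eqb_spec k 1). subst k. rewrite fseq_1, Hxs_e.
    { rewrite (gsum_ext _ _ _ _ (fun i => / d i0 * (d i * (if Nat.eqb i0 i then 1 else 0)))).
      rewrite rgsum_scal, rgsum_delta_in. field; auto. apply seq_NoDup. apply in_seq; lia.
      intros i Hi. apply in_seq in Hi. rewrite Hx0 by (apply Hinj; lia). rewrite Nat.eqb_sym. ring. }
    destruct (Nat.eqb_spec k L).
    + subst k. unfold L. rewrite fseq_L. unfold x0. rewrite (lin_scal _ Hyl), HysF by lia. ring.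
    + rewrite fseq_mid by (unfold L in *; lia). rewrite Hx0 by (apply Hin; unfold L in *; lia).
      destruct (Nat.eqb_spec (m k) i0). pose proof (Hmm 1%nat k ltac:(lia) ltac:(lia) ltac:(unfold L in *; lia)). lia.
      ring.
  -
    assert (Hml : (m 1%nat + (l - 1) <= m l)%nat) by (apply Hmm; unfold L in *; lia).
    assert (Hmln : (m l <= m n)%nat) by (pose proof (Hmm l n ltac:(lia) ltac:(unfold L in *; lia) ltac:(lia)); lia).
    assert (Hinl : in_len N (m l)) by (apply Hin; unfold L in *; lia).
    destruct (Nat.eqb_spec k 1). subst k. rewrite fseq_1, Hxs_e. destruct (Nat.eqb_spec 1 l); [lia|].
    { apply rgsum_zero. intros i Hi. apply in_seq in Hi. rewrite (estar_e X N e estar Ho) by (auto; apply Hinj; lia).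
      destruct (Nat.eqb_spec i (m l)); [lia|ring]. }
    destruct (Nat.eqb_spec k L).
    + subst k. unfold L. rewrite fseq_L. rewrite HysF by lia. destruct (Nat.eqb_spec (Nat.max 2 n) l); [lia|auto].
    + rewrite fseq_mid by (unfold L in *; lia). rewrite (estar_e X N e estar Ho) by (auto; apply Hin; unfold L in *; lia).
      destruct (Nat.eqb_spec k l); subst.
      * rewrite Nat.eqb_refl. auto.
      * destruct (Nat.eqb_spec (m k) (m l)); auto. exfalso.
        destruct (Nat.lt_total k l) as [Hkl|[Hkl|Hkl]]; try lia.
        pose proof (Hmm k l ltac:(lia) ltac:(lia) ltac:(unfold L in *; lia)). lia.
        pose proof (Hmm l k ltac:(lia) ltac:(lia) ltac:(unfold L in *; lia)). lia.
  -
    destruct (Nat.eqb_spec k 1). subst k. rewrite fseq_1, Hxs_e.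
    { destruct (Nat.eqb_spec 1 L); [unfold L in *; lia|]. apply rgsum_zero. intros i Hi. apply in_seq in Hi.
      rewrite Hz0e by lia. ring. }
    destruct (Nat.eqb_spec k L).
    + subst k. unfold L. rewrite fseq_L. auto.
    + rewrite fseq_mid by (unfold L in *; lia).
      assert ((m k <= m n)%nat) by (pose proof (Hmm k n ltac:(lia) ltac:(unfold L in *; lia) ltac:(lia)); lia).
      pose proof (Hin k ltac:(unfold L in *; lia)).
      rewrite Hz0e by (unfold in_len in *; destruct N; lia). destruct (Nat.eqb_spec k L); [lia|auto].
Qed.

Lemma HB_norming (X : NormedSpace) (L : nat) (f : nat -> X -> R) :
  (forall k, (1 <= k <= L)%nat -> is_linear_fun X (f k)) ->
  (forall a : nat -> R, exists v, forall k, (1 <= k <= L)%nat -> f k v = a k) ->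
  forall W, exists c, (forall v, dotL L c (fun k => f k v) <= vnorm v) /\
    (forall eta, 0 < eta -> exists z, (forall k, (1 <= k <= L)%nat -> f k z = f k W) /\
        vnorm z < dotL L c (fun k => f k W) + eta).
Proof.
  intros Hlin Hsurj W.
  set (E := fun a r => exists v, (forall k, (1 <= k <= L)%nat -> f k v = a k) /\ r = - vnorm v).
  set (qq := fun a => - Rsup (E a)).
  assert (HEne : forall a, exists r, E a r).
  { intros a. destruct (Hsurj a) as [v Hv]. exists (- vnorm v), v. auto. }
  assert (HEb : forall a r, E a r -> r <= 0).
  { intros a r [v [_ ->]]. pose proof (vnorm_nonneg v). lra. }
  assert (Hqle : forall a v, (forall k, (1 <= k <= L)%nat -> f k v = a k) -> qq a <= vnorm v).
  { intros a v Hv. unfold qq. assert (- vnorm v <= Rsup (E a)) by (eapply Rsup_ub; [apply HEb|]; exists v; auto). lra. }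
  assert (Hqap : forall a eta, 0 < eta -> exists v, (forall k, (1 <= k <= L)%nat -> f k v = a k) /\ vnorm v < qq a + eta).
  { intros a eta He. destruct (Rsup_approx (E a) 0 eta (HEne a) (HEb a) He) as [r [[v [Hv ->]] Hr]].
    exists v. split; auto. unfold qq. lra. }
  assert (Hqge : forall a M, (forall v, (forall k, (1 <= k <= L)%nat -> f k v = a k) -> M <= vnorm v) -> M <= qq a).
  { intros a M HM. unfold qq. assert (Rsup (E a) <= - M).
    { apply Rsup_le; auto. intros r [v [Hv ->]]. specialize (HM v Hv). lra. } lra. }
  assert (Hq0 : forall a, 0 <= qq a) by (intros a; apply Hqge; intros; apply vnorm_nonneg).
  assert (Hsub : sublin qq).
  { split.
    - intros a b. apply Rle_plus_epsilon. intros eta He.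
      destruct (Hqap a (eta/2) ltac:(lra)) as [va [Hva Hva']]. destruct (Hqap b (eta/2) ltac:(lra)) as [vb [Hvb Hvb']].
      pose proof (Hqle (padd a b) (vadd va vb)).
      assert (qq (padd a b) <= vnorm (vadd va vb)).
      { apply H. intros k Hk. rewrite (lin_add _ (Hlin k Hk)), Hva, Hvb by auto. reflexivity. }
      pose proof (vnorm_triangle va vb). lra.
    - intros t a [Ht|Ht].
      + apply Rle_antisym.
        * apply Rle_plus_epsilon. intros eta He.
          destruct (Hqap a (eta / t) ltac:(apply Rdiv_lt_0_compat; lra)) as [v [Hv Hv']].
          assert (qq (pscal t a) <= vnorm (vscal t v)).
          { apply Hqle. intros k Hk. rewrite (lin_scal _ (Hlin k Hk)), Hv by auto. reflexivity. }
          rewrite vnorm_scal, Rabs_right in H by lra.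
          apply (Rmult_lt_compat_l t) in Hv'; auto.
          replace (t * (qq a + eta / t)) with (t * qq a + eta) in Hv' by (field; lra). lra.
        * apply Hqge. intros v Hv.
          assert (qq a <= vnorm (vscal (/ t) v)).
          { apply Hqle. intros k Hk. rewrite (lin_scal _ (Hlin k Hk)), Hv by auto. unfold pscal. field. lra. }
          rewrite vnorm_scal, Rabs_right in H by (left; apply Rinv_0_lt_compat; lra).
          apply (Rmult_le_compat_l t) in H; [|lra]. rewrite <- Rmult_assoc, Rinv_r, Rmult_1_l in H by lra. lra.
      + subst t. rewrite Rmult_0_l. apply Rle_antisym; [|apply Hq0].
        pose proof (Hqle (pscal 0 a) vzero). rewrite vnorm_z in H. apply H.
        intros k Hk. rewrite (lin_zero _ (Hlin k Hk)). unfold pscal. ring. }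
  assert (Hdep : depL L qq).
  { intros a b Hab. unfold qq. f_equal. apply Rsup_ext. intros r. unfold E. split; intros [v [Hv ->]]; exists v; split; auto;
    intros k Hk; rewrite Hv by auto; [|symmetry]; apply Hab; auto. }
  destruct (HB_fin L qq Hsub Hdep (fun k => f k W)) as [c [Hc1 Hc2]].
  exists c. split.
  - intros v. eapply Rle_trans. apply Hc1. apply Hqle. auto.
  - intros eta He. destruct (Hqap (fun k => f k W) eta He) as [z [Hz Hz']]. exists z. split; auto. rewrite Hc2. auto.
Qed.

Lemma rgsum_nonneg_in l (f : nat -> R) : (forall i, In i l -> 0 <= f i) -> 0 <= gsum 0 Rplus l f.
Proof. induction l; simpl; intros H. lra. pose proof (H a (or_introl eq_refl)). pose proof (IHl (fun i Hi => H i (or_intror Hi))). lra. Qed.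

Lemma rgsum_sub l (f g : nat -> R) :
  gsum 0 Rplus l (fun i => f i - g i) = gsum 0 Rplus l f - gsum 0 Rplus l g.
Proof. induction l; simpl. ring. rewrite IHl; ring. Qed.

Lemma key_ineq (X : NormedSpace) (HX : complete X) N (e : nat -> X) estar m n xs ys lam :
  is_basis X N e -> biorthogonal X N e estar -> (1 <= n)%nat ->
  (1 <= m 1%nat)%nat -> (forall j, (1 <= j < n)%nat -> (m j < m (S j))%nat) -> lt_len (m n) N ->
  in_dual X xs -> in_dual X ys ->
  forall d : nat -> R, (forall v, xs v = gsum 0 Rplus (seq 1 (m 1%nat)) (fun k => d k * estar k v)) ->
  (forall j, (1 <= j <= m n)%nat -> ys (e j) = 0) ->
  HypX X N e (m 1%nat) lam -> 0 <= lam ->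
  forall q (mm : nat -> nat), mm 0%nat = 0%nat -> (forall j, (1 <= j <= q)%nat -> (mm (j - 1) + 2 <= mm j)%nat) ->
  forall (w : nat -> X) (Cc : nat -> nat -> R),
  (forall j k, (1 <= j <= q)%nat -> (1 <= k <= Nat.max 2 n)%nat ->
     functional_seq X estar m n xs ys k (w j) =
       if (Nat.ltb (mm (j - 1)%nat) k && Nat.ltb k (mm j))%bool then Cc j k else 0) ->
  forall eps : nat -> R, (forall j, (1 <= j <= q)%nat -> eps j = 1 \/ eps j = -1) ->
  forall z, (forall k, (1 <= k <= Nat.max 2 n)%nat ->
     functional_seq X estar m n xs ys k z = functional_seq X estar m n xs ys k (gsum vzero vadd (seq 1 q) w)) ->
  forall h, (exists a, forall v, h v = gsum 0 Rplus (seq 1 (Nat.max 2 n)) (fun k => a k * functional_seq X estar m n xs ys k v)) ->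
  (forall v, Rabs (h v) <= vnorm v) ->
  Rabs (h (gsum vzero vadd (seq 1 q) (fun j => vscal (eps j) (w j)))) <= lam * vnorm z.
Proof.
  intros Hb Ho Hn Hm1 Hmono HmN Hxs Hys d Hd HysF Hyp Hlam q mm Hmm0 Hstep w Cc Hfw eps Heps z Hz h [a Ha] Hh1.
  set (L := Nat.max 2 n). fold L in Hfw, Hz, Ha.
  set (f := functional_seq X estar m n xs ys). fold f in Hfw, Hz, Ha.
  assert (Hfd : forall k, (1 <= k <= L)%nat -> in_dual X (f k)) by (intros k Hk; eapply f_dual; eauto).
  assert (Hfl : forall k, (1 <= k <= L)%nat -> is_linear_fun X (f k)) by (intros k Hk; apply Hfd; auto).
  destruct (choice_fun 0 (fun k C => (1 <= k <= L)%nat -> 0 <= C /\ forall v, Rabs (f k v) <= C * vnorm v)) as [Cf HCf].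
  { intros k. destruct (le_lt_dec 1 k); [destruct (le_lt_dec k L)|].
    - destruct (Hfd k ltac:(lia)) as [_ [C HC]]. exists (Rabs C). intros _. split. apply Rabs_pos.
      intros v. eapply Rle_trans. apply HC. apply Rmult_le_compat_r. apply vnorm_nonneg. apply Rle_abs.
    - exists 0. lia.
    - exists 0. lia. }
  assert (Hmm : forall a b, (1 <= a)%nat -> (a <= b)%nat -> (b <= n)%nat -> (m a + (b - a) <= m b)%nat)
    by (apply m_mono; auto).
  assert (Hin : forall k, (1 <= k <= n)%nat -> in_len N (m k)) by (apply m_inlen; auto).
  assert (Hinj : forall i, (1 <= i <= m n)%nat -> in_len N i).
  { intros i Hi. pose proof (Hin n ltac:(lia)). unfold in_len in *. destruct N; lia. }
  assert (Hm1n : (m 1%nat <= m n)%nat) by (pose proof (Hmm 1%nat n ltac:(lia) ltac:(lia) ltac:(lia)); lia).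
  assert (HL2 : (2 <= L)%nat) by (unfold L; lia).
  assert (HLn : forall k, (2 <= k < L)%nat -> (k < n)%nat) by (intros k Hk; unfold L in *; lia).
  assert (Hmmono : forall i j, (i <= j <= q)%nat -> (mm i + 2 * (j - i) <= mm j)%nat).
  { intros i j Hij. destruct Hij as [Hij Hjq]. induction Hij. lia.
    specialize (IHHij ltac:(lia)). specialize (Hstep (S m0) ltac:(lia)). simpl in Hstep.
    replace (m0 - 0)%nat with m0 in Hstep by lia. lia. }
  set (inblk := fun j k => (Nat.ltb (mm (j - 1)%nat) k && Nat.ltb k (mm j))%bool).
  assert (Hinblk : forall j k, inblk j k = true <-> (mm (j - 1) < k < mm j)%nat).
  { intros j k. unfold inblk. rewrite Bool.andb_true_iff, !Nat.ltb_lt. tauto. }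
  assert (Hdisj : forall j j' k, (1 <= j <= q)%nat -> (1 <= j' <= q)%nat -> inblk j k = true -> inblk j' k = true -> j = j').
  { intros j j' k Hj Hj' H1 H2. apply Hinblk in H1. apply Hinblk in H2.
    destruct (Nat.lt_total j j') as [Hl|[Hl|Hl]]; auto.
    - pose proof (Hmmono j (j' - 1)%nat ltac:(lia)). lia.
    - pose proof (Hmmono j' (j - 1)%nat ltac:(lia)). lia. }
  set (W1 := gsum vzero vadd (seq 1 q) w).
  assert (Hfz : forall k, (1 <= k <= L)%nat -> f k z = gsum 0 Rplus (seq 1 q) (fun j => if inblk j k then Cc j k else 0)).
  { intros k Hk. rewrite Hz by auto. unfold W1. rewrite (lin_gsum _ (Hfl k Hk)). apply gsum_ext.
    intros j Hj. apply in_seq in Hj. apply Hfw; lia. }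
  set (mm' := fun j => if Nat.leb j q then mm j else (mm q + L + 2)%nat).
  assert (Hmm'0 : mm' 0%nat = 0%nat) by (unfold mm'; simpl; auto).
  assert (Hmm'q : forall j, (j <= q)%nat -> mm' j = mm j).
  { intros j Hj. unfold mm'. destruct (Nat.leb_spec j q); auto; lia. }
  assert (Hmm'Sq : mm' (S q) = (mm q + L + 2)%nat).
  { unfold mm'. destruct (Nat.leb_spec (S q) q); auto; lia. }
  assert (Hmm'step : forall j, (1 <= j <= S q)%nat -> (mm' (j - 1) + 2 <= mm' j)%nat).
  { intros j Hj. destruct (Nat.eq_dec j (S q)).
    - subst. rewrite Hmm'Sq, Hmm'q by lia. replace (S q - 1)%nat with q by lia. lia.
    - rewrite !Hmm'q by lia. apply Hstep; lia. }
  assert (Hmm'mono : forall i j, (i <= j <= S q)%nat -> (mm' i + 2 * (j - i) <= mm' j)%nat).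
  { intros i j Hij. destruct Hij as [Hij Hjq]. induction Hij. lia.
    specialize (IHHij ltac:(lia)). specialize (Hmm'step (S m0) ltac:(lia)). simpl in Hmm'step.
    replace (m0 - 0)%nat with m0 in Hmm'step by lia. lia. }
  assert (HmmL : (L <= mm' (S q))%nat) by (rewrite Hmm'Sq; lia).
  assert (Hnob : forall k, ((exists j, (1 <= j <= q)%nat /\ k = mm j) \/ (mm q < k)%nat) ->
                  forall j', (1 <= j' <= q)%nat -> inblk j' k = false).
  { intros k Hk j' Hj'. destruct (inblk j' k) eqn:E; auto. apply Hinblk in E. exfalso.
    destruct Hk as [[j [Hj ->]]|Hk].
    - destruct (le_lt_dec j' j).
      + pose proof (Hmmono j' j ltac:(lia)). lia.
      + pose proof (Hmmono j (j' - 1)%nat ltac:(lia)). lia.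
    - pose proof (Hmmono j' q ltac:(lia)). lia. }
  assert (Hfz0 : forall k, (1 <= k <= L)%nat -> (forall j', (1 <= j' <= q)%nat -> inblk j' k = false) -> f k z = 0).
  { intros k Hk Hnb. rewrite Hfz by auto. apply rgsum_zero. intros j Hj. apply in_seq in Hj. rewrite Hnb by lia. auto. }
  set (sg := fun j k => (if Nat.leb k (mm' j) then 1 else 0) - (if Nat.leb k (mm' (j - 1)%nat) then 1 else 0)).
  set (w' := fun j => if Nat.leb j q then w j else vzero).
  assert (Hsg : forall j k, (1 <= j <= S q)%nat ->
     (sg j k = 1 /\ (mm' (j - 1) < k <= mm' j)%nat) \/ (sg j k = 0 /\ ~ (mm' (j - 1) < k <= mm' j)%nat)).
  { intros j k Hj. pose proof (Hmm'step j Hj). unfold sg.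
    destruct (Nat.leb_spec k (mm' j)); destruct (Nat.leb_spec k (mm' (j - 1)%nat)).
    - right. split. ring. lia.
    - left. split. ring. lia.
    - lia.
    - right. split. ring. lia. }
  assert (Hfw' : forall j k, (1 <= j <= q)%nat -> (1 <= k <= L)%nat -> f k (w j) = if inblk j k then Cc j k else 0)
    by exact Hfw.
  assert (Hwv : forall j k, (1 <= j <= S q)%nat -> (1 <= k <= L)%nat -> f k (w' j) = sg j k * f k z).
  { intros j k Hj Hk. unfold w'.
    destruct (Hsg j k Hj) as [[Hs1 Hs2]|[Hs1 Hs2]]; rewrite Hs1.
    - destruct (Nat.leb_spec j q).
      + rewrite Hmm'q in Hs2 by lia. rewrite Hmm'q in Hs2 by lia.
        destruct (Nat.eq_dec k (mm j)).
        * rewrite Hfz0; auto. rewrite Hfw' by lia.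
          assert (inblk j k = false) as ->. { destruct (inblk j k) eqn:E; auto. apply Hinblk in E. lia. }
          ring. apply Hnob. left. exists j. split; auto; lia.
        * assert (Hib : inblk j k = true) by (apply Hinblk; lia).
          rewrite Hfw', Hib by lia. rewrite Hfz by auto.
          rewrite (gsum_ext _ _ _ _ (fun i => if Nat.eqb i j then Cc j k else 0)).
          { rewrite (rgsum_single 1 q j). rewrite Nat.eqb_refl.
            destruct (Nat.leb_spec 1 j); [|lia]. destruct (Nat.ltb_spec j (1 + q)); [|lia]. simpl. ring.
            intros i Hi. destruct (Nat.eqb_spec i j); [lia|auto]. }
          intros i Hi. apply in_seq in Hi. destruct (Nat.eqb_spec i j).
          -- subst. rewrite Hib. auto.
          -- destruct (inblk i k) eqn:E; auto. exfalso. apply n1. apply (Hdisj i j k); auto; lia.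
      + rewrite (lin_zero _ (Hfl k Hk)). rewrite Hfz0; auto. ring.
        apply Hnob. right. replace j with (S q) in Hs2 by lia. rewrite Hmm'q in Hs2 by lia.
        replace (S q - 1)%nat with q in Hs2 by lia. lia.
    - destruct (Nat.leb_spec j q).
      + rewrite Hfw' by lia. rewrite !Hmm'q in Hs2 by lia.
        destruct (inblk j k) eqn:E. apply Hinblk in E. lia. ring.
      + rewrite (lin_zero _ (Hfl k Hk)). ring. }
  set (eps' := fun j => if Nat.leb j q then eps j else 1).
  set (Weps := gsum vzero vadd (seq 1 q) (fun j => vscal (eps j) (w j))).
  assert (HWeps : Weps = gsum vzero vadd (seq 1 (S q)) (fun j => vscal (eps' j) (w' j))).
  { unfold Weps. rewrite seq_S, vgsum_app. simpl. unfold eps', w'.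
    destruct (Nat.leb_spec (S q) q); [lia|]. rewrite vscal_z, !vadd_0.
    apply gsum_ext. intros j Hj. apply in_seq in Hj. destruct (Nat.leb_spec j q); [auto|lia]. }
  set (tau := fun k => gsum 0 Rplus (seq 1 (S q)) (fun j => eps' j * sg j k)).
  assert (HfWeps : forall k, (1 <= k <= L)%nat -> f k Weps = tau k * f k z).
  { intros k Hk. rewrite HWeps, (lin_gsum _ (Hfl k Hk)). unfold tau.
    rewrite Rmult_comm, <- rgsum_scal. apply gsum_ext. intros j Hj. apply in_seq in Hj.
    rewrite (lin_scal _ (Hfl k Hk)), Hwv by lia. ring. }
  assert (Htau : forall k, Rabs (tau k) <= INR (S q)).
  { intros k. unfold tau. eapply Rle_trans. apply rgsum_abs.
    assert (Hc : forall len a0, gsum 0 Rplus (seq a0 len) (fun _ => 1) = INR len).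
    { induction len; intros a0; simpl. auto. rewrite IHlen. destruct len; simpl; ring. }
    rewrite <- (Hc (S q) 1%nat). apply rgsum_le. intros j Hj. apply in_seq in Hj.
    rewrite Rabs_mult. assert (Rabs (eps' j) = 1).
    { unfold eps'. destruct (Nat.leb_spec j q). destruct (Heps j ltac:(lia)) as [-> | ->].
      apply Rabs_R1. rewrite Rabs_left; lra. apply Rabs_R1. }
    rewrite H. destruct (Hsg j k ltac:(lia)) as [[-> _]|[-> _]]. rewrite Rabs_R1; lra. rewrite Rabs_R0; lra. }
  set (K := INR (S q) * gsum 0 Rplus (seq 1 L) (fun k => Rabs (a k) * Cf k)).
  assert (HK : 0 <= K).
  { unfold K. apply Rmult_le_pos. apply pos_INR. apply rgsum_nonneg_in. intros k Hk. apply in_seq in Hk.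
    apply Rmult_le_pos. apply Rabs_pos. apply HCf; lia. }
  assert (HP : forall P, (m n <= P)%nat ->
     Rabs (h Weps) <= lam * vnorm (Sp N e estar P z) + K * vnorm (vsub (Sp N e estar P z) z)).
  { intros P HPn.
    set (cP := fun i => if Nat.leb i P then cf N estar z i else 0).
    assert (HcPz : zero_out N cP).
    { intros i Hi. unfold cP. rewrite (cf_zero_out N estar z i Hi). destruct (Nat.leb i P); auto. }
    set (G := fun j => if Nat.eqb j 0 then 0%nat else if Nat.ltb (mm' j) L then m (mm' j) else (P + 2 * j)%nat).
    assert (HG0 : G 0%nat = 0%nat) by auto.
    assert (Hmm'2 : forall j, (1 <= j <= S q)%nat -> (2 <= mm' j)%nat).
    { intros j Hj. pose proof (Hmm'mono 0%nat j ltac:(lia)). lia. }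
    assert (HGm : forall j, (1 <= j <= S q)%nat -> (mm' j < L)%nat -> G j = m (mm' j) /\ (mm' j < n)%nat).
    { intros j Hj Hl. unfold G. destruct (Nat.eqb_spec j 0); [lia|]. destruct (Nat.ltb_spec (mm' j) L); [|lia].
      split; auto; apply HLn; split; auto; apply Hmm'2; auto. }
    assert (HGP : forall j, (1 <= j)%nat -> (L <= mm' j)%nat -> G j = (P + 2 * j)%nat).
    { intros j Hj Hl. unfold G. destruct (Nat.eqb_spec j 0); [lia|]. destruct (Nat.ltb_spec (mm' j) L); [lia|auto]. }
    assert (Hmn_le : forall a0, (1 <= a0 <= n)%nat -> (m a0 <= m n)%nat).
    { intros a0 Ha0. pose proof (Hmm a0 n ltac:(lia) ltac:(lia) ltac:(lia)). lia. }
    assert (HGstep : forall j, (1 <= j <= S q)%nat -> (G (j - 1) + 2 <= G j)%nat).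
    { intros j Hj. pose proof (Hmm'step j Hj).
      destruct (Nat.eq_dec j 1).
      - subst j. change (G 0%nat + 2 <= G 1%nat)%nat. rewrite HG0. destruct (Nat.ltb_spec (mm' 1%nat) L).
        + destruct (HGm 1%nat ltac:(lia) H0) as [-> Hn']. pose proof (Hmm 1%nat (mm' 1%nat) ltac:(lia) ltac:(lia) ltac:(lia)). lia.
        + rewrite HGP by lia. lia.
      - destruct (Nat.ltb_spec (mm' (j - 1)%nat) L); destruct (Nat.ltb_spec (mm' j) L).
        + destruct (HGm j Hj H1) as [-> Hn1]. destruct (HGm (j - 1)%nat ltac:(lia) H0) as [-> Hn2].
          pose proof (Hmm'2 (j - 1)%nat ltac:(lia)). pose proof (Hmm (mm' (j - 1)%nat) (mm' j) ltac:(lia) ltac:(lia) ltac:(lia)). lia.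
        + destruct (HGm (j - 1)%nat ltac:(lia) H0) as [-> Hn2]. rewrite (HGP j) by lia.
          pose proof (Hmm'2 (j - 1)%nat ltac:(lia)). pose proof (Hmn_le (mm' (j - 1)%nat) ltac:(lia)). lia.
        + lia.
        + rewrite (HGP j), (HGP (j - 1)%nat) by lia. lia. }
    assert (HG1 : (m 1%nat < G 1%nat)%nat).
    { destruct (Nat.ltb_spec (mm' 1%nat) L).
      + destruct (HGm 1%nat ltac:(lia) H) as [-> Hn']. pose proof (Hmm'2 1%nat ltac:(lia)).
        pose proof (Hmm 1%nat (mm' 1%nat) ltac:(lia) ltac:(lia) ltac:(lia)). lia.
      + rewrite HGP by lia. lia. }
    assert (HGmono : forall j, (1 <= j <= S q)%nat -> (G 1%nat <= G j)%nat).
    { intros j [Hj1 Hj2]. induction Hj1. lia. pose proof (HGstep (S m0) ltac:(lia)). simpl in H.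
      replace (m0 - 0)%nat with m0 in H by lia. specialize (IHHj1 ltac:(lia)). lia. }
    assert (HGk : forall j k, (1 <= j <= S q)%nat -> (2 <= k < L)%nat -> ((m k <= G j)%nat <-> (k <= mm' j)%nat)).
    { intros j k Hj Hk. pose proof (HLn k Hk). destruct (Nat.ltb_spec (mm' j) L).
      - destruct (HGm j Hj H0) as [-> Hn']. split; intros H1.
        + destruct (le_lt_dec k (mm' j)); auto. pose proof (Hmm (mm' j) k ltac:(pose proof (Hmm'2 j Hj); lia) ltac:(lia) ltac:(lia)). lia.
        + pose proof (Hmm k (mm' j) ltac:(lia) H1 ltac:(lia)). lia.
      - rewrite HGP by lia. split; intros; [lia|]. pose proof (Hmn_le k ltac:(lia)). lia. }
    assert (HcPG : forall j, (1 <= j <= S q)%nat -> cP (G j) = 0).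
    { intros j Hj. destruct (Nat.ltb_spec (mm' j) L).
      - destruct (HGm j Hj H) as [HGj Hn']. assert (Hjq : (j <= q)%nat).
        { destruct (Nat.eq_dec j (S q)); [subst; lia|lia]. }
        rewrite HGj. rewrite Hmm'q in * by auto. pose proof (Hmm'2 j Hj). rewrite Hmm'q in H0 by auto.
        unfold cP. pose proof (Hmn_le (mm j) ltac:(lia)). destruct (Nat.leb_spec (m (mm j)) P); [|lia].
        unfold cf. rewrite (proj2 (inb_spec _ _) (Hin (mm j) ltac:(lia))).
        assert (Hfk : f (mm j) z = estar (m (mm j)) z) by (unfold f; rewrite fseq_mid by lia; auto).
        rewrite <- Hfk. apply Hfz0. lia. apply Hnob. left. exists j. split; auto; lia.
      - rewrite HGP by lia. unfold cP. destruct (Nat.leb_spec (P + 2 * j) P); auto; lia. }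
    set (A := fun j => comb e cP (G j)).
    assert (HcPSp : comb e cP P = Sp N e estar P z).
    { unfold Sp. apply comb_ext. intros i Hi. unfold cP. destruct (Nat.leb_spec i P); auto; lia. }
    assert (HFA : forall j k, (j <= S q)%nat -> (1 <= k <= L)%nat ->
       f k (A j) = (if Nat.leb k (mm' j) then 1 else 0) * f k (Sp N e estar P z)).
    { intros j k Hj Hk. destruct (Nat.eq_dec j 0).
      - subst j. unfold A. rewrite HG0, comb_0, (lin_zero _ (Hfl k Hk)), Hmm'0.
        destruct (Nat.leb_spec k 0); [lia|]. ring.
      - pose proof (Hmm'2 j ltac:(lia)).
        destruct (Nat.eq_dec k 1).
        + subst k. unfold f. rewrite !fseq_1. destruct (Nat.leb_spec 1 (mm' j)); [|lia]. rewrite Rmult_1_l.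
          rewrite !Hd. apply gsum_ext. intros i Hi. apply in_seq in Hi. f_equal. unfold A.
          assert (Hil : in_len N i) by (apply Hinj; lia).
          pose proof (HGmono j ltac:(lia)).
          unfold Sp. rewrite !(estar_comb X N e estar Ho) by (auto; apply cf_zero_out).
          destruct (Nat.leb_spec i (G j)); [|lia]. destruct (Nat.leb_spec i P); [|lia].
          unfold cP. destruct (Nat.leb_spec i P); [auto|lia].
        + destruct (Nat.eq_dec k L).
          * subst k. unfold f, L. rewrite !fseq_L. fold L. destruct (Nat.ltb_spec (mm' j) L).
            -- destruct (Nat.leb_spec L (mm' j)); [lia|]. rewrite Rmult_0_l.
               unfold A. destruct (HGm j ltac:(lia) H0) as [-> Hn'].
               unfold comb. rewrite (lin_gsum _ (proj1 Hys)). apply rgsum_zero. intros i Hi. apply in_seq in Hi.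
               pose proof (Hmn_le (mm' j) ltac:(lia)).
               rewrite (lin_scal _ (proj1 Hys)), HysF by lia. ring.
            -- destruct (Nat.leb_spec L (mm' j)); [|lia]. rewrite Rmult_1_l. unfold A. rewrite HGP by lia.
               rewrite comb_stable with (p := P) by (try lia; intros i Hi; unfold cP; destruct (Nat.leb_spec i P); auto; lia).
               rewrite HcPSp. auto.
          * assert (Hk2 : (2 <= k < L)%nat) by lia. unfold f. rewrite !fseq_mid by lia.
            pose proof (HLn k Hk2). assert (Hink : in_len N (m k)) by (apply Hin; lia).
            pose proof (Hmn_le k ltac:(lia)).
            unfold A, Sp. rewrite !(estar_comb X N e estar Ho) by (auto; apply cf_zero_out).
            destruct (Nat.leb_spec (m k) P); [|lia].
            pose proof (HGk j k ltac:(lia) Hk2) as Hgk.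
            destruct (Nat.leb_spec (m k) (G j)) as [Ha1|Ha1]; destruct (Nat.leb_spec k (mm' j)) as [Hb1|Hb1].
            ++ unfold cP. destruct (Nat.leb_spec (m k) P); [ring|lia].
            ++ exfalso. apply Hgk in Ha1. lia.
            ++ exfalso. apply Hgk in Hb1. lia.
            ++ ring. }
    set (Bk := fun j => blockv e cP (G (j - 1)%nat) (G j)).
    assert (HBk : forall j, (1 <= j <= S q)%nat -> Bk j = vsub (A j) (A (j - 1)%nat)).
    { intros j Hj. unfold Bk, blockv, A. apply block_comb. apply HcPG; auto. pose proof (HGstep j Hj). lia. }
    assert (HFB : forall j k, (1 <= j <= S q)%nat -> (1 <= k <= L)%nat -> f k (Bk j) = sg j k * f k (Sp N e estar P z)).
    { intros j k Hj Hk. rewrite HBk, (lin_sub _ (Hfl k Hk)), !HFA by (auto; lia). unfold sg. ring. }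
    assert (HBsum : gsum vzero vadd (seq 1 (S q)) Bk = Sp N e estar P z).
    { rewrite (gsum_ext _ _ _ _ (fun j => vsub (A j) (A (j - 1)%nat))).
      rewrite vgsum_telescope. unfold A. rewrite HG0, comb_0, vsub_0r, HGP by lia.
      rewrite comb_stable with (p := P) by (try lia; intros i Hi; unfold cP; destruct (Nat.leb_spec i P); auto; lia).
      auto.
      intros j Hj. apply in_seq in Hj. apply HBk. lia. }
    set (EB := gsum vzero vadd (seq 1 (S q)) (fun j => vscal (eps' j) (Bk j))).
    assert (HEB : vnorm EB <= lam * vnorm (Sp N e estar P z)).
    { rewrite <- HBsum. unfold EB, Bk. apply Hyp; auto.
      - intros j Hj. unfold eps'. destruct (Nat.leb_spec j q). apply Heps; lia. auto. }
    assert (HfEB : forall k, (1 <= k <= L)%nat -> f k EB = tau k * f k (Sp N e estar P z)).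
    { intros k Hk. unfold EB. rewrite (lin_gsum _ (Hfl k Hk)). unfold tau.
      rewrite Rmult_comm, <- rgsum_scal. apply gsum_ext. intros j Hj. apply in_seq in Hj.
      rewrite (lin_scal _ (Hfl k Hk)), HFB by lia. ring. }
    assert (Hdiff : h EB - h Weps = gsum 0 Rplus (seq 1 L)
                (fun k => a k * tau k * f k (vsub (Sp N e estar P z) z))).
    { rewrite !Ha. rewrite <- rgsum_sub.
      apply gsum_ext. intros k Hk. apply in_seq in Hk.
      rewrite HfEB, HfWeps, (lin_sub _ (Hfl k ltac:(lia))) by lia. ring. }
    assert (Hdb : Rabs (h EB - h Weps) <= K * vnorm (vsub (Sp N e estar P z) z)).
    { rewrite Hdiff. eapply Rle_trans. apply rgsum_abs.
      set (dn := vnorm (vsub (Sp N e estar P z) z)).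
      replace (K * dn) with (gsum 0 Rplus (seq 1 L) (fun k => Rabs (a k) * INR (S q) * (Cf k * dn))).
      2:{ unfold K. rewrite (gsum_ext _ _ _ _ (fun k => (INR (S q) * dn) * (Rabs (a k) * Cf k))).
          rewrite rgsum_scal. ring. intros; ring. }
      apply rgsum_le. intros k Hk. apply in_seq in Hk.
      destruct (HCf k ltac:(lia)) as [HC0 HC1]. specialize (HC1 (vsub (Sp N e estar P z) z)).
      rewrite !Rabs_mult. pose proof (Htau k). pose proof (Rabs_pos (a k)). pose proof (Rabs_pos (tau k)).
      pose proof (vnorm_nonneg (vsub (Sp N e estar P z) z)).
      pose proof (Rabs_pos (f k (vsub (Sp N e estar P z) z))).
      apply Rmult_le_compat; [apply Rmult_le_pos; auto | auto | apply Rmult_le_compat_l; auto | exact HC1]. }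
    pose proof (Hh1 EB). pose proof (Rabs_triang (h EB) (- (h EB - h Weps))).
    rewrite Rabs_Ropp in H0. replace (h EB + - (h EB - h Weps)) with (h Weps) in H0 by ring.
    lra. }
  apply Rle_plus_epsilon. intros eta Heta.
  destruct (Sp_conv X N e estar Hb Ho z (eta / (lam + K + 1))) as [P0 HP0].
  { apply Rdiv_lt_0_compat; lra. }
  set (P := max P0 (m n)). specialize (HP P ltac:(unfold P; lia)). specialize (HP0 P ltac:(unfold P; lia)).
  pose proof (vnorm_add_sub (Sp N e estar P z) z).
  assert ((lam + K) * vnorm (vsub (Sp N e estar P z) z) <= eta).
  { apply Rle_trans with ((lam + K + 1) * (eta / (lam + K + 1))).
    pose proof (vnorm_nonneg (vsub (Sp N e estar P z) z)). nra.
    right. field. lra. }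
  nra.
Qed.

Lemma inF_lin (X : NormedSpace) L f g : (forall k, (1 <= k <= L)%nat -> is_linear_fun X (f k)) ->
  inF X L f g -> is_linear_fun X g.
Proof.
  intros Hf [c Hc] a b x y. rewrite !Hc. rewrite <- !rgsum_scal, <- rgsum_add. apply gsum_ext.
  intros k Hk. apply in_seq in Hk. rewrite (Hf k) by lia. ring.
Qed.

Lemma inF_bdd (X : NormedSpace) L f g : (forall k, (1 <= k <= L)%nat -> in_dual X (f k)) ->
  inF X L f g -> exists C, forall v, Rabs (g v) <= C * vnorm v.
Proof.
  intros Hf [c Hc].
  destruct (choice_fun 0 (fun k C => (1 <= k <= L)%nat -> forall v, Rabs (f k v) <= C * vnorm v)) as [Cf HCf].
  { intros k. destruct (le_lt_dec 1 k); [destruct (le_lt_dec k L)|].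
    - destruct (Hf k ltac:(lia)) as [_ [C HC]]. exists C. auto.
    - exists 0. lia. - exists 0. lia. }
  exists (gsum 0 Rplus (seq 1 L) (fun k => Rabs (c k) * Cf k)). intros v. rewrite Hc.
  eapply Rle_trans. apply rgsum_abs. rewrite Rmult_comm, <- rgsum_scal. apply rgsum_le.
  intros k Hk. apply in_seq in Hk. rewrite Rabs_mult. specialize (HCf k ltac:(lia) v).
  pose proof (Rabs_pos (c k)). apply Rle_trans with (Rabs (c k) * (Cf k * vnorm v)).
  apply Rmult_le_compat_l; auto. right; ring.
Qed.

Lemma dnorm_le1 (X : NormedSpace) (g : X -> R) : is_linear_fun X g ->
  (exists C, forall v, Rabs (g v) <= C * vnorm v) -> dnorm X g <= 1 -> forall v, Rabs (g v) <= vnorm v.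
Proof.
  intros Hl [C HC] Hd v. destruct (Req_dec (vnorm v) 0) as [H0|H0].
  - apply vnorm_eq0 in H0. subst v. rewrite (lin_zero _ Hl), Rabs_R0, vnorm_z. lra.
  - pose proof (vnorm_nonneg v).
    set (u := vscal (/ vnorm v) v).
    assert (Hu : vnorm u = 1) by (unfold u; rewrite vnorm_scal, Rabs_right; [field|left; apply Rinv_0_lt_compat]; lra).
    assert (Rabs (g u) <= dnorm X g).
    { unfold dnorm. apply (Rsup_ub _ _ (Rabs C)).
      - intros r [v' [Hv' ->]]. eapply Rle_trans. apply HC. pose proof (vnorm_nonneg v').
        apply Rle_trans with (Rabs C * vnorm v'). apply Rmult_le_compat_r; auto. apply Rle_abs.
        pose proof (Rabs_pos C). nra.
      - exists u. split; auto. lra. }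
    unfold u in H1. rewrite (lin_scal _ Hl), Rabs_mult, Rabs_right in H1 by (left; apply Rinv_0_lt_compat; lra).
    apply (Rmult_le_compat_l (vnorm v)) in H1; auto. rewrite <- Rmult_assoc, Rinv_r, Rmult_1_l in H1 by lra. nra.
Qed.

Lemma dnorm_ge (X : NormedSpace) (g : X -> R) : (forall v, Rabs (g v) <= vnorm v) -> dnorm X g <= 1.
Proof.
  intros H. unfold dnorm. apply Rsup_le.
  - exists (Rabs (g vzero)), vzero. split; auto. rewrite vnorm_z; lra.
  - intros r [v [Hv ->]]. eapply Rle_trans; eauto.
Qed.

Lemma main_core (X : NormedSpace) (HX : complete X)
  (N : option nat) (HN : match N with Some n => (1 <= n)%nat | None => True end)
  (e : nat -> X) (Hbasis : is_basis X N e)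
  (estar : nat -> X -> R) (Hestar : biorthogonal X N e estar)
  (lam : R) (n : nat) (m : nat -> nat)
  (Hn : (1 <= n)%nat) (Hm1 : (1 <= m 1%nat)%nat)
  (Hmono : forall j, (1 <= j < n)%nat -> (m j < m (S j))%nat)
  (HmN : lt_len (m n) N)
  (xs ys : X -> R)
  (Hxs : in_dual X xs) (Hxs0 : exists v, xs v <> 0)
  (Hys : in_dual X ys) (Hys0 : exists v, ys v <> 0)
  (HxsF : exists c : nat -> R, forall v,
            xs v = gsum 0 Rplus (seq 1 (m 1%nat)) (fun k => c k * estar k v))
  (HysF : forall j, (1 <= j <= m n)%nat -> ys (e j) = 0)
  (Hyp : HypX X N e (m 1%nat) lam) :
  dual_skipped_uncond_basis X (Nat.max 2 n) (functional_seq X estar m n xs ys) lam.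
Proof.
  set (L := Nat.max 2 n). set (f := functional_seq X estar m n xs ys).
  assert (Hfd : forall k, (1 <= k <= L)%nat -> in_dual X (f k)) by (intros k Hk; eapply f_dual; eauto).
  assert (Hfl : forall k, (1 <= k <= L)%nat -> is_linear_fun X (f k)) by (intros k Hk; apply Hfd; auto).
  destruct (v_exists X N e estar m n xs ys Hbasis Hestar Hn Hm1 Hmono HmN Hxs Hxs0 Hys Hys0 HxsF HysF) as [vv Hvv].
  fold L f in Hvv.
  pose proof HxsF as [d Hd].
  assert (Hlam : 0 <= lam).
  { assert (H1 : in_len N 1). { unfold in_len. destruct N; lia. }
    pose proof (Hyp 1%nat (fun j => if Nat.eqb j 0 then 0%nat else (m 1%nat + 2)%nat) (delta 1) (fun _ => 1)
      eq_refl ltac:(intros j Hj; replace j with 1%nat by lia; simpl; lia) ltac:(intros; simpl; lia)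
      (delta_zero_out N 1 H1) ltac:(intros; left; auto)).
    simpl in H. rewrite vscal_1, !vadd_0 in H.
    unfold blockv in H. simpl in H.
    replace (m 1%nat + 2 - 0 - 1)%nat with (m 1%nat + 1)%nat in H by lia.
    fold (comb e (delta 1) (m 1%nat + 1)) in H.
    rewrite comb_stable with (p := 1%nat) in H by (try lia; intros k Hk; unfold delta; destruct (Nat.eqb_spec k 1); auto; lia).
    rewrite comb_delta in H by lia.
    pose proof (e_nonzero X N e estar Hbasis Hestar 1%nat H1).
    assert (0 < vnorm (e 1%nat)).
    { pose proof (vnorm_nonneg (e 1%nat)). destruct H2; auto. exfalso. apply H0, vnorm_eq0; auto. }
    nra. }
  split.
  - intros c Hc k Hk. specialize (Hc (vv k)).
    rewrite (gsum_ext _ _ _ _ (fun l => c l * (if Nat.eqb k l then 1 else 0))) in Hc.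
    + rewrite rgsum_delta_in in Hc; auto. apply seq_NoDup. apply in_seq; lia.
    + intros l Hl. apply in_seq in Hl. fold f. rewrite Hvv by (unfold L in *; lia). rewrite Nat.eqb_sym. auto.
  - exists (fun k g => g (vv k)). split; [|split].
    + intros; reflexivity.
    + intros k l Hk Hl. fold f. rewrite Hvv by auto. rewrite Nat.eqb_sym. reflexivity.
    + intros q mm yy eps Hmm0 Hstep Hblk Heps.
      destruct (choice_fun (fun _ => 0) (fun j (c : nat -> R) => (1 <= j <= q)%nat ->
          (forall i, ~ in_len (Some L) i -> c i = 0) /\
          yy j = gsum (Fs_zero X) (Fs_add X) (seq (mm (j - 1)%nat + 1) (mm j - mm (j - 1)%nat - 1))
                   (fun i => Fs_scal X (c i) (fun g => g (vv i))))) as [Cc HCc].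
      { intros j. destruct (le_lt_dec 1 j); [destruct (le_lt_dec j q)|].
        - destruct (Hblk j ltac:(lia)) as [c [Hc1 Hc2]]. exists c. auto.
        - exists (fun _ => 0). lia. - exists (fun _ => 0). lia. }
      set (w := fun j => gsum vzero vadd (seq (mm (j - 1)%nat + 1) (mm j - mm (j - 1)%nat - 1))
                    (fun i => vscal (Cc j i) (vv i))).
      assert (Hyyw : forall j g, (1 <= j <= q)%nat -> is_linear_fun X g -> yy j g = g (w j)).
      { intros j g Hj Hg. destruct (HCc j Hj) as [_ ->]. rewrite Fs_gsum_eval. unfold w.
        rewrite (lin_gsum _ Hg). apply gsum_ext. intros i _. unfold Fs_scal. rewrite (lin_scal _ Hg). auto. }
      assert (Hfw : forall j k, (1 <= j <= q)%nat -> (1 <= k <= L)%nat ->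
         f k (w j) = if (Nat.ltb (mm (j - 1)%nat) k && Nat.ltb k (mm j))%bool then Cc j k else 0).
      { intros j k Hj Hk. unfold w. rewrite (lin_gsum _ (Hfl k Hk)).
        rewrite (rgsum_single _ _ k).
        - pose proof (Hstep j Hj). rewrite (lin_scal _ (Hfl k Hk)), Hvv, Nat.eqb_refl by auto.
          destruct (Nat.leb_spec (mm (j - 1)%nat + 1) k); destruct (Nat.ltb_spec k (mm (j - 1)%nat + 1 + (mm j - mm (j - 1)%nat - 1)));
          destruct (Nat.ltb_spec (mm (j - 1)%nat) k); destruct (Nat.ltb_spec k (mm j)); simpl; try lia; ring.
        - intros i Hi. rewrite (lin_scal _ (Hfl k Hk)).
          destruct (le_lt_dec 1 i); [destruct (le_lt_dec i L)|].
          + rewrite Hvv by lia. destruct (Nat.eqb_spec k i); [lia|ring].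
          + rewrite (proj1 (HCc j Hj) i) by (unfold in_len; lia). ring.
          + rewrite (proj1 (HCc j Hj) i) by (unfold in_len; lia). ring. }
      set (Weps := gsum vzero vadd (seq 1 q) (fun j => vscal (eps j) (w j))).
      set (W1 := gsum vzero vadd (seq 1 q) w).
      set (rho := fun W => Rsup (fun r => exists g, inF X L f g /\ dnorm X g <= 1 /\ r = Rabs (g W))).
      assert (Hrho_eq : forall (Pf : (X -> R) -> R) W, (forall g, is_linear_fun X g -> Pf g = g W) ->
                Fs_norm X L f Pf = rho W).
      { intros Pf W HPf. unfold Fs_norm, rho. apply Rsup_ext. intros r.
        split; intros [g [Hg1 [Hg2 ->]]]; exists g; repeat split; auto; rewrite HPf; auto; apply (inF_lin X L f g Hfl Hg1). }
      assert (HFeps : Fs_norm X L f (gsum (Fs_zero X) (Fs_add X) (seq 1 q) (fun j => Fs_scal X (eps j) (yy j))) = rho Weps).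
      { apply Hrho_eq. intros g Hg. rewrite Fs_gsum_eval. unfold Weps. rewrite (lin_gsum _ Hg).
        apply gsum_ext. intros j Hj. apply in_seq in Hj. unfold Fs_scal. rewrite (lin_scal _ Hg), Hyyw by (auto; lia). auto. }
      assert (HF1 : Fs_norm X L f (gsum (Fs_zero X) (Fs_add X) (seq 1 q) yy) = rho W1).
      { apply Hrho_eq. intros g Hg. rewrite Fs_gsum_eval. unfold W1. rewrite (lin_gsum _ Hg).
        apply gsum_ext. intros j Hj. apply in_seq in Hj. rewrite Hyyw by (auto; lia). auto. }
      rewrite HFeps, HF1.
      assert (Hrho_b : forall W r, (exists g, inF X L f g /\ dnorm X g <= 1 /\ r = Rabs (g W)) -> r <= vnorm W).
      { intros W r [g [Hg1 [Hg2 ->]]]. apply dnorm_le1; auto. apply (inF_lin X L f g Hfl Hg1). apply (inF_bdd X L f g Hfd Hg1). }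
      assert (Hrho_ne : forall W, exists r, exists g, inF X L f g /\ dnorm X g <= 1 /\ r = Rabs (g W)).
      { intros W. exists (Rabs 0), (fun _ => 0). split; [|split].
        - exists (fun _ => 0). intros v. rewrite rgsum_zero; auto. intros; ring.
        - apply dnorm_ge. intros v. rewrite Rabs_R0. apply vnorm_nonneg.
        - auto. }
      assert (Hsurj : forall a : nat -> R, exists v, forall k, (1 <= k <= L)%nat -> f k v = a k).
      { intros a. exists (gsum vzero vadd (seq 1 L) (fun k => vscal (a k) (vv k))). intros k Hk.
        rewrite (lin_gsum _ (Hfl k Hk)). rewrite (gsum_ext _ _ _ _ (fun l => a l * (if Nat.eqb k l then 1 else 0))).
        apply rgsum_delta_in. apply seq_NoDup. apply in_seq; lia.
        intros l Hl. apply in_seq in Hl. rewrite (lin_scal _ (Hfl k Hk)), Hvv by lia. auto. }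
      destruct (HB_norming X L f Hfl Hsurj W1) as [c0 [Hc0a Hc0b]].
      set (g0 := fun v => dotL L c0 (fun k => f k v)).
      assert (Hg0F : inF X L f g0) by (exists c0; intros v; reflexivity).
      assert (Hg0l : is_linear_fun X g0) by (apply (inF_lin X L f g0 Hfl Hg0F)).
      assert (Hg0b : forall v, Rabs (g0 v) <= vnorm v).
      { intros v. apply Rabs_le. split.
        - pose proof (Hc0a (vscal (-1) v)). fold (g0 (vscal (-1) v)) in H.
          rewrite (lin_scal _ Hg0l), vnorm_scal in H. replace (Rabs (-1)) with 1 in H by (rewrite Rabs_left; lra). lra.
        - apply Hc0a. }
      assert (Hstep1 : rho Weps <= lam * g0 W1).
      { unfold rho. apply Rsup_le; [apply Hrho_ne|]. intros r [g [Hg1 [Hg2 ->]]].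
        apply Rle_plus_epsilon. intros eta Heta.
        destruct (Hc0b (eta / (lam + 1))) as [z [Hz1 Hz2]]. apply Rdiv_lt_0_compat; lra.
        fold (g0 W1) in Hz2.
        assert (Hgb : forall v, Rabs (g v) <= vnorm v).
        { apply dnorm_le1; auto. apply (inF_lin X L f g Hfl Hg1). apply (inF_bdd X L f g Hfd Hg1). }
        pose proof (key_ineq X HX N e estar m n xs ys lam Hbasis Hestar Hn Hm1 Hmono HmN Hxs Hys d Hd HysF Hyp Hlam
                      q mm Hmm0 Hstep w Cc Hfw eps Heps z Hz1 g Hg1 Hgb).
        fold Weps in H.
        apply Rle_trans with (lam * (g0 W1 + eta / (lam + 1))).
        { eapply Rle_trans. exact H. apply Rmult_le_compat_l; lra. }
        assert (lam * (eta / (lam + 1)) <= eta).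
        { apply Rle_trans with ((lam + 1) * (eta / (lam + 1))). apply Rmult_le_compat_r. left; apply Rdiv_lt_0_compat; lra. lra.
          right; field; lra. }
        nra. }
      assert (Hstep2 : g0 W1 <= rho W1).
      { eapply Rle_trans. apply Rle_abs. unfold rho. apply (Rsup_ub _ _ (vnorm W1)).
        apply Hrho_b. exists g0. split; auto. split; auto. apply dnorm_ge; auto. }
      apply Rle_trans with (lam * g0 W1); auto. apply Rmult_le_compat_l; auto.
Qed.

Lemma HypX_part2 (X : NormedSpace) N (e : nat -> X) m1 lam :
  skipped_uncond_X X N e lam -> HypX X N e m1 lam.
Proof.
  intros H r G c eps HG0 Hstep HG1 Hz Heps.
  apply (H r G (fun j => blockv e c (G (j - 1)%nat) (G j)) eps HG0 Hstep); auto.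
  intros j Hj. exists c. split; auto.
Qed.

Lemma gsum_shift {T : Type} (z : T) add len a b (F : nat -> T) :
  gsum z add (seq a len) (fun k => F (k + b)%nat) = gsum z add (seq (a + b) len) F.
Proof.
  revert a. induction len; intros a; simpl; auto. rewrite IHlen. f_equal.
Qed.

Lemma HypX_part1 (X : NormedSpace) N (e : nat -> X) m1 lam :
  (1 <= m1)%nat -> lt_len m1 N ->
  (forall x : X, block_span vzero vadd vscal N e 1 m1 x ->
      skipped_uncond_X X (shifted_len N m1) (shifted_seq X e m1 x) lam) ->
  HypX X N e m1 lam.
Proof.
  intros Hm1 HmN H r G c eps HG0 Hstep HG1 Hz Heps.
  destruct (Nat.eq_dec r 0) as [->|Hr].
  { simpl. rewrite vnorm_z. lra. }
  assert (HGmono : forall j, (1 <= j <= r)%nat -> (G 1%nat <= G j)%nat).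
  { intros j [Hj1 Hj2]. induction Hj1. lia. pose proof (Hstep (S m) ltac:(lia)). simpl in H0.
    replace (m - 0)%nat with m in H0 by lia. specialize (IHHj1 ltac:(lia)). lia. }
  specialize (HG1 ltac:(lia)).
  set (x := comb e c m1).
  assert (Hx : block_span vzero vadd vscal N e 1 m1 x) by (exists c; split; auto).
  set (G' := fun j => if Nat.eqb j 0 then 0%nat else (G j - m1 + 1)%nat).
  set (c' := fun k => if Nat.eqb k 0 then 0 else if Nat.eqb k 1 then 1 else c (m1 + k - 1)%nat).
  assert (Hc' : forall i, ~ in_len (shifted_len N m1) i -> c' i = 0).
  { intros i Hi. unfold c'. destruct (Nat.eqb_spec i 0); auto. destruct (Nat.eqb_spec i 1).
    - exfalso. apply Hi. unfold in_len, shifted_len. destruct N; [split; lia| split; auto; lia].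
    - apply Hz. intros Hc. apply Hi. unfold in_len, shifted_len in *. destruct N; lia. }
  apply (H x Hx r G' (fun j => blockv e c (G (j - 1)%nat) (G j)) eps).
  - auto.
  - intros j Hj. unfold G'. destruct (Nat.eqb_spec (j - 1) 0); destruct (Nat.eqb_spec j 0); try lia.
    + pose proof (HGmono j Hj). lia.
    + pose proof (Hstep j Hj). pose proof (HGmono (j - 1)%nat ltac:(lia)). lia.
  - intros j Hj. exists c'. split; auto.
    unfold G'. unfold blockv. destruct (Nat.eqb_spec j 0); [lia|].
    destruct (Nat.eqb_spec (j - 1) 0).
    +
      assert (j = 1%nat) by lia. subst j. simpl (1 - 1)%nat. rewrite HG0.
      replace (G 1%nat - 0 - 1)%nat with (m1 + (G 1%nat - 1 - m1))%nat by lia.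
      replace (G 1%nat - m1 + 1 - 0 - 1)%nat with (S (G 1%nat - 1 - m1))%nat by lia.
      simpl. rewrite seq_app, vgsum_app. fold (comb e c m1). fold x.
      unfold c' at 1, shifted_seq at 1. simpl. rewrite vscal_1. f_equal.
      replace (S m1) with (2 + (m1 - 1))%nat by lia. rewrite <- gsum_shift.
      apply gsum_ext. intros k Hk. apply in_seq in Hk. unfold c', shifted_seq.
      destruct (Nat.eqb_spec k 0); [lia|]. destruct (Nat.eqb_spec k 1); [lia|].
      replace (m1 + k - 1)%nat with (k + (m1 - 1))%nat by lia. auto.
    + pose proof (HGmono (j - 1)%nat ltac:(lia)). pose proof (HGmono j Hj). pose proof (Hstep j Hj).
      replace (G j - m1 + 1 - (G (j - 1) - m1 + 1) - 1)%nat with (G j - G (j - 1) - 1)%nat by lia.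
      replace (G (j - 1) + 1)%nat with ((G (j - 1) - m1 + 1 + 1) + (m1 - 1))%nat at 1 by lia.
      rewrite <- gsum_shift. apply gsum_ext. intros k Hk. apply in_seq in Hk. unfold c', shifted_seq.
      destruct (Nat.eqb_spec k 0); [lia|]. destruct (Nat.eqb_spec k 1); [lia|].
      replace (m1 + k - 1)%nat with (k + (m1 - 1))%nat by lia. auto.
  - auto.
Qed.


Theorem lemma5p1 (X : NormedSpace) (HX : complete X)
  (N : option nat) (HN : match N with Some n => (1 <= n)%nat | None => True end)
  (e : nat -> X) (Hbasis : is_basis X N e)
  (estar : nat -> X -> R) (Hestar : biorthogonal X N e estar)
  (lam : R) (n : nat) (m : nat -> nat)
  (Hn : (1 <= n)%nat) (Hm1 : (1 <= m 1%nat)%nat)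
  (Hmono : forall j, (1 <= j < n)%nat -> (m j < m (S j))%nat)
  (HmN : lt_len (m n) N)
  (xs ys : X -> R)
  (Hxs : in_dual X xs) (Hxs0 : exists v, xs v <> 0)
  (Hys : in_dual X ys) (Hys0 : exists v, ys v <> 0)
  (HxsF : exists c : nat -> R, forall v,
            xs v = gsum 0 Rplus (seq 1 (m 1%nat)) (fun k => c k * estar k v))
  (HysF : forall j, (1 <= j <= m n)%nat -> ys (e j) = 0) :
  ((forall x : X, block_span vzero vadd vscal N e 1 (m 1%nat) x ->
      skipped_uncond_X X (shifted_len N (m 1%nat)) (shifted_seq X e (m 1%nat) x) lam) ->
   dual_skipped_uncond_basis X (Nat.max 2 n) (functional_seq X estar m n xs ys) lam)
  /\
  (skipped_uncond_X X N e lam ->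
   dual_skipped_uncond_basis X (Nat.max 2 n) (functional_seq X estar m n xs ys) lam).

Proof.
  assert (Hm1n : (m 1%nat <= m n)%nat).
  { pose proof (m_mono m n Hmono 1%nat n ltac:(lia) Hn ltac:(lia)). lia. }
  split; intros H.
  - apply (main_core X HX N HN e Hbasis estar Hestar lam n m Hn Hm1 Hmono HmN xs ys Hxs Hxs0 Hys Hys0 HxsF HysF).
    apply HypX_part1; auto.
    unfold lt_len in *. destruct N; lia.
  - apply (main_core X HX N HN e Hbasis estar Hestar lam n m Hn Hm1 Hmono HmN xs ys Hxs Hxs0 Hys Hys0 HxsF HysF).
    apply HypX_part2; auto.
Qed.
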